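(* Let $n\ge1$ be fixed, $\Theta_h^{n-1}\in W_h$ given, $L\ge L_s$, and let $(\Theta_h^{n,i},\mathbf q_h^{n,i},p_h^{n,i},\mathbf u_h^{n,i})$, $i\ge1$, be the iterates of Problem $P_h^{n,i}$ started from $\Theta_h^{n,0}=\Theta_h^{n-1}$. Assume (A1)–(A5). Then there exist constants $K>0$ and $C_{\Omega,d}>0$, depending only on $L$, $a_\star,a^\star$, $M_{\mathbf u}$, $\sup|f_w|$, the Lipschitz constants of $a,f_w,\mathbf f_1,f_2,\mathbf f_3$ and on $\Omega,d$, but not on $h$, $\tau$ or $i$, such that if $\tau\le 1/K$ then for all $i\ge2$ $$\|\Theta_h^{n,i}-\Theta_h^{n,i-1}\|^2\le\frac{3C_{\Omega,d}^2L}{3C_{\Omega,d}^2L+\tau}\,\|\Theta_h^{n,i-1}-\Theta_h^{n,i-2}\|^2,$$ so the iteration converges linearly; moreover $\mathbf q_h^{n,i},p_h^{n,i},\mathbf u_h^{n,i}$ converge as well and the limit is a solution of Problem $P_h^n$.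
   Context: Let $\Omega\subset\mathbb R^d$ be a bounded polygonal domain with Lipschitz boundary, $\tau>0$ a time step, $\langle\cdot,\cdot\rangle$ the $L^2(\Omega)$ inner product, $\|\cdot\|$ the $L^2$ norm. Given $s:\mathbb R\to[0,1]$, $a,f_w,f_2:\mathbb R\to\mathbb R$, $\mathbf f_1,\mathbf f_3:\mathbb R\to\mathbb R^d$ with: (A1) $s$ monotonically increasing and Lipschitz with constant $L_s$; (A2) $a$ Lipschitz, $0<a_\star\le a\le a^\star<\infty$; (A3) $\mathbf f_1,f_2,\mathbf f_3,f_w$ Lipschitz, $f_w$ bounded; (A4) there is $M_{\mathbf u}$ with $\|\mathbf u_h^{n,i}\|_{L^\infty}\le M_{\mathbf u}$ and $\|\mathbf u_h^n\|_{L^\infty}\le M_{\mathbf u}$ uniformly in $h$, $i$; (A5) initial datum in $L^2(\Omega)$. $\mathcal T_h$ regular simplicial mesh; $W_h$ piecewise constants; $V_h$ lowest order Raviart–Thomas space $\{\mathbf q\in H(\mathrm{div};\Omega):\mathbf q|_T=\mathbf a_T+b_Tx\}$. $C_{\Omega,d}$ denotes a constant, independent of $h$, such that for every $w_h\in W_h$ there is $\mathbf v_h\in V_h$ with $\nabla\cdot\mathbf v_h=w_h$ and $\|\mathbf v_h\|\le C_{\Omega,d}\|w_h\|$. Notation $s_h^{k}=s(\Theta_h^k)$, $s_h^{n,i}=s(\Theta_h^{n,i})$. Problem $P_h^n$: find $\Theta_h^n,p_h^n\in W_h$, $\mathbf q_h^n,\mathbf u_h^n\in V_h$ such that for all $w_h\in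 W_h$, $\mathbf v_h\in V_h$: $\langle s_h^n-s_h^{n-1},w_h\rangle+\tau\langle\nabla\cdot\mathbf q_h^n,w_h\rangle=0$; $\langle\mathbf q_h^n,\mathbf v_h\rangle-\langle\Theta_h^n,\nabla\cdot\mathbf v_h\rangle-\langle f_w(s_h^n)\mathbf u_h^n,\mathbf v_h\rangle=\langle\mathbf f_1(s_h^n),\mathbf v_h\rangle$; $\langle\nabla\cdot\mathbf u_h^n,w_h\rangle=\langle f_2(s_h^n),w_h\rangle$; $\langle a(s_h^n)\mathbf u_h^n,\mathbf v_h\rangle-\langle p_h^n,\nabla\cdot\mathbf v_h\rangle+\langle\mathbf f_3(s_h^n),\mathbf v_h\rangle=0$. Problem $P_h^{n,i}$ (L-scheme): given $\Theta_h^{n,i-1}\in W_h$, find $\Theta_h^{n,i},p_h^{n,i}\in W_h$, $\mathbf q_h^{n,i},\mathbf u_h^{n,i}\in V_h$ such that for all $w_h\in W_h$, $\mathbf v_h\in V_h$: $\langle L(\Theta_h^{n,i}-\Theta_h^{n,i-1})+s_h^{n,i-1},w_h\rangle+\tau\langle\nabla\cdot\mathbf q_h^{n,i},w_h\rangle=\langle s_h^{n-1},w_h\rangle$; $\langle\mathbf q_h^{n,i},\mathbf v_h\rangle-\langle\Theta_h^{n,i},\nabla\cdot\mathbf v_h\rangle-\langle f_w(s_h^{n,i-1})\mathbf u_h^{n,i},\mathbf v_h\rangle=\langle\mathbf f_1(s_h^{n,i-1}),\mathbf v_h\rangle$; $\langle\nabla\cdot\mathbf u_h^{n,i},w_h\rangle=\langle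 f_2(s_h^{n,i-1}),w_h\rangle$; $\langle a(s_h^{n,i-1})\mathbf u_h^{n,i},\mathbf v_h\rangle-\langle p_h^{n,i},\nabla\cdot\mathbf v_h\rangle+\langle\mathbf f_3(s_h^{n,i-1}),\mathbf v_h\rangle=0$. *)

(* Defs.v *)
From Stdlib Require Import Arith Reals Lra Lia.
Open Scope R_scope.

(** * Finite-dimensional encoding of the lowest-order mixed FE setting.
    Points of R^d are functions [nat -> R]; only coordinates [c < d] matter. *)

Definition pt := nat -> R.

Fixpoint sumR (n : nat) (f : nat -> R) : R :=
  match n with O => 0 | S m => sumR m f + f m end.

Definition dot (d : nat) (x y : pt) : R := sumR d (fun c => x c * y c).
Definition enorm (d : nat) (x : pt) : R := sqrt (dot d x x).
Definition peq (d : nat) (x y : pt) : Prop := forall c, (c < d)%nat -> x c = y c.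

Fixpoint det (n : nat) (M : nat -> nat -> R) : R :=
  match n with
  | O => 1
  | S m => sumR (S m) (fun j =>
             (-1) ^ j * M O j *
             det m (fun r c => M (S r) (if Nat.ltb c j then c else S c)))
  end.

(** A simplex in R^d is given by its d+1 vertices [T 0, ..., T d]. *)
Definition simplex := nat -> pt.

Definition vol (d : nat) (T : simplex) : R :=
  Rabs (det d (fun r c => T (S r) c - T O c)) / INR (Factorial.fact d).

Definition in_simplex (d : nat) (T : simplex) (x : pt) : Prop :=
  exists lam : nat -> R,
    (forall j, (j <= d)%nat -> 0 <= lam j) /\ sumR (S d) lam = 1 /\
    forall c, (c < d)%nat -> x c = sumR (S d) (fun j => lam j * T j c).

Definition shared (d : nat) (T T' : simplex) (j : nat) : Prop :=
  exists j', (j' <= d)%nat /\ peq d (T j) (T' j').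

(** A simplicial mesh: [nel] elements, element [k] has vertices [elt k j], j <= d.
    Omega_h is the union of its elements. *)
Record mesh := { nel : nat; elt : nat -> simplex }.

(** Regular (conforming) simplicial mesh: non-degenerate elements, distinct
    elements are distinct simplices and intersect exactly in the convex hull of
    their common vertices (a common sub-simplex / face, or empty). *)
Definition conforming (d : nat) (M : mesh) : Prop :=
  (forall k, (k < nel M)%nat -> 0 < vol d (elt M k)) /\
  (forall k k', (k < nel M)%nat -> (k' < nel M)%nat -> k <> k' ->
     (exists j, (j <= d)%nat /\ ~ shared d (elt M k) (elt M k') j) /\
     forall x, in_simplex d (elt M k) x -> in_simplex d (elt M k') x ->
       exists lam : nat -> R,
         (forall j, (j <= d)%nat -> 0 <= lam j) /\
         (forall j, (j <= d)%nat -> ~ shared d (elt M k) (elt M k') j -> lam j = 0) /\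
         sumR (S d) lam = 1 /\
         forall c, (c < d)%nat -> x c = sumR (S d) (fun j => lam j * elt M k j c)).

(** W_h: piecewise constants, value [w k] on element k. *)
Definition W := nat -> R.

(** Broken lowest-order Raviart-Thomas fields: on element k, x |-> a_k + b_k x. *)
Record rt := { rta : nat -> pt; rtb : nat -> R }.

Definition rt_eval (v : rt) (k : nat) (x : pt) : pt :=
  fun c => rta v k c + rtb v k * x c.

Definition rt_sub (v w : rt) : rt :=
  {| rta := fun k c => rta v k c - rta w k c; rtb := fun k => rtb v k - rtb w k |}.

(** Elementwise divergence of a_k + b_k x is d * b_k. *)
Definition divh (d : nat) (v : rt) (k : nat) : R := INR d * rtb v k.

(** V_h = broken RT fields lying in H(div; Omega): the normal component is
    continuous across every interior face (face of element k opposite to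
    its local vertex j0 shared with element k').  [y] ranges over the normals. *)
Definition in_Vh (d : nat) (M : mesh) (v : rt) : Prop :=
  forall k k' j0, (k < nel M)%nat -> (k' < nel M)%nat -> k <> k' -> (j0 <= d)%nat ->
    (forall j, (j <= d)%nat -> j <> j0 -> shared d (elt M k) (elt M k') j) ->
    forall y : pt,
      (forall j j1, (j <= d)%nat -> (j1 <= d)%nat -> j <> j0 -> j1 <> j0 ->
          dot d y (fun c => elt M k j c - elt M k j1 c) = 0) ->
      forall j, (j <= d)%nat -> j <> j0 ->
        dot d y (rt_eval v k (elt M k j)) = dot d y (rt_eval v k' (elt M k j)).

(** Exact integrals over a simplex T:
    - of an affine function f : |T|/(d+1) * sum_j f(T j);
    - of F.G for affine vector fields F, G (via int lam_i lam_j = |T|(1+delta_ij)/((d+1)(d+2))). *)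
Definition int_aff (d : nat) (T : simplex) (f : pt -> R) : R :=
  vol d T / INR (S d) * sumR (S d) (fun j => f (T j)).

Definition int_dot (d : nat) (T : simplex) (F G : pt -> pt) : R :=
  vol d T / (INR (S d) * INR (S (S d))) *
  (sumR (S d) (fun j => dot d (F (T j)) (G (T j))) +
   dot d (fun c => sumR (S d) (fun j => F (T j) c))
         (fun c => sumR (S d) (fun j => G (T j) c))).

Definition ipW (d : nat) (M : mesh) (w1 w2 : W) : R :=
  sumR (nel M) (fun k => vol d (elt M k) * w1 k * w2 k).
Definition ipWdiv (d : nat) (M : mesh) (w : W) (v : rt) : R :=
  sumR (nel M) (fun k => vol d (elt M k) * w k * divh d v k).
Definition ipVw (d : nat) (M : mesh) (g : W) (u v : rt) : R :=
  sumR (nel M) (fun k => g k * int_dot d (elt M k) (rt_eval u k) (rt_eval v k)).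
Definition ipV (d : nat) (M : mesh) (u v : rt) : R := ipVw d M (fun _ => 1) u v.
Definition ipFV (d : nat) (M : mesh) (F : nat -> pt) (v : rt) : R :=
  sumR (nel M) (fun k => int_aff d (elt M k) (fun x => dot d (F k) (rt_eval v k x))).

Definition normW (d : nat) (M : mesh) (w : W) : R := sqrt (ipW d M w w).
Definition normV (d : nat) (M : mesh) (v : rt) : R := sqrt (ipV d M v v).

Definition Linf_le (d : nat) (M : mesh) (v : rt) (m : R) : Prop :=
  forall k x, (k < nel M)%nat -> in_simplex d (elt M k) x -> enorm d (rt_eval v k x) <= m.

Definition div_stable (d : nat) (M : mesh) (C : R) : Prop :=
  forall w : W, exists v : rt, in_Vh d M v /\
    (forall k, (k < nel M)%nat -> divh d v k = w k) /\ normV d M v <= C * normW d M w.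

Definition Wsub (w1 w2 : W) : W := fun k => w1 k - w2 k.

(** Problem P_h^{n,i}: (Th, q, p, u) is the i-th iterate, given the (i-1)-th Thp
    and the previous time level Th0 (= Theta_h^{n-1}). *)
Definition Lscheme_step (d : nat) (M : mesh) (s a fw f2 : R -> R) (f1 f3 : R -> pt)
  (L tau : R) (Th0 Thp : W) (Th : W) (q : rt) (p : W) (u : rt) : Prop :=
  in_Vh d M q /\ in_Vh d M u /\
  let sp : W := fun k => s (Thp k) in
  (forall w : W,
     ipW d M (fun k => L * (Th k - Thp k) + sp k) w + tau * ipWdiv d M w q
     = ipW d M (fun k => s (Th0 k)) w) /\
  (forall v, in_Vh d M v ->
     ipV d M q v - ipWdiv d M Th v - ipVw d M (fun k => fw (sp k)) u v
     = ipFV d M (fun k => f1 (sp k)) v) /\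
  (forall w : W, ipWdiv d M w u = ipW d M (fun k => f2 (sp k)) w) /\
  (forall v, in_Vh d M v ->
     ipVw d M (fun k => a (sp k)) u v - ipWdiv d M p v + ipFV d M (fun k => f3 (sp k)) v = 0).

Definition Ph_n (d : nat) (M : mesh) (s a fw f2 : R -> R) (f1 f3 : R -> pt)
  (tau : R) (Th0 : W) (Th : W) (q : rt) (p : W) (u : rt) : Prop :=
  in_Vh d M q /\ in_Vh d M u /\
  let sn : W := fun k => s (Th k) in
  (forall w : W,
     ipW d M (fun k => sn k - s (Th0 k)) w + tau * ipWdiv d M w q = 0) /\
  (forall v, in_Vh d M v ->
     ipV d M q v - ipWdiv d M Th v - ipVw d M (fun k => fw (sn k)) u v
     = ipFV d M (fun k => f1 (sn k)) v) /\
  (forall w : W, ipWdiv d M w u = ipW d M (fun k => f2 (sn k)) w) /\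
  (forall v, in_Vh d M v ->
     ipVw d M (fun k => a (sn k)) u v - ipWdiv d M p v + ipFV d M (fun k => f3 (sn k)) v = 0).

Definition Lip (f : R -> R) (Lc : R) : Prop :=
  forall x y, Rabs (f x - f y) <= Lc * Rabs (x - y).
Definition LipV (d : nat) (f : R -> pt) (Lc : R) : Prop :=
  forall x y, enorm d (fun c => f x c - f y c) <= Lc * Rabs (x - y).

(* Main.v *)
Require Import Defs.
From Stdlib Require Import Reals Lra Lia Psatz Classical IndefiniteDescription.
Open Scope R_scope.


Lemma sumR_ext n f g : (forall k, (k < n)%nat -> f k = g k) -> sumR n f = sumR n g.
Proof. induction n; simpl; intros H; auto. rewrite IHn by (intros; apply H; lia). rewrite H by lia. auto. Qed.

Lemma sumR_plus n f g : sumR n (fun k => f k + g k) = sumR n f + sumR n g.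
Proof. induction n; simpl; [lra|rewrite IHn; lra]. Qed.
Lemma sumR_minus n f g : sumR n (fun k => f k - g k) = sumR n f - sumR n g.
Proof. induction n; simpl; [lra|rewrite IHn; lra]. Qed.
Lemma sumR_scal n c f : sumR n (fun k => c * f k) = c * sumR n f.
Proof. induction n; simpl; [lra|rewrite IHn; lra]. Qed.
Lemma sumR_zero n : sumR n (fun _ => 0) = 0.
Proof. induction n; simpl; [lra|rewrite IHn; lra]. Qed.
Lemma sumR_const n c : sumR n (fun _ => c) = INR n * c.
Proof. induction n; simpl sumR; [simpl; lra|rewrite IHn, S_INR; lra]. Qed.
Lemma sumR_nonneg n f : (forall k, (k < n)%nat -> 0 <= f k) -> 0 <= sumR n f.
Proof. induction n; simpl; intros H; [lra|]. pose proof (H n ltac:(lia)). pose proof (IHn ltac:(intros; apply H; lia)). lra. Qed.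
Lemma sumR_le n f g : (forall k, (k < n)%nat -> f k <= g k) -> sumR n f <= sumR n g.
Proof. induction n; simpl; intros H; [lra|]. pose proof (H n ltac:(lia)). pose proof (IHn ltac:(intros; apply H; lia)). lra. Qed.
Lemma sumR_ind n f k0 : (k0 < n)%nat -> (forall k, (k < n)%nat -> k <> k0 -> f k = 0) -> sumR n f = f k0.
Proof.
  induction n; simpl; intros Hk H; [lia|].
  destruct (Nat.eq_dec k0 n) as [->|Hne].
  - rewrite (sumR_ext n f (fun _ => 0)) by (intros; apply H; lia). rewrite sumR_zero; lra.
  - rewrite IHn by (try lia; intros; apply H; lia). rewrite (H n) by lia. lra.
Qed.
Lemma sumR_swap n m F : sumR n (fun a => sumR m (fun b => F a b)) = sumR m (fun b => sumR n (fun a => F a b)).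
Proof.
  induction n; simpl.
  - rewrite sumR_zero; auto.
  - rewrite IHn. rewrite <- sumR_plus. auto.
Qed.
Lemma sumR_term_le n f k0 : (k0 < n)%nat -> (forall k, (k < n)%nat -> 0 <= f k) -> f k0 <= sumR n f.
Proof.
  induction n; simpl; intros Hk H; [lia|].
  destruct (Nat.eq_dec k0 n) as [->|Hne].
  - pose proof (sumR_nonneg n f ltac:(intros; apply H; lia)). lra.
  - pose proof (IHn ltac:(lia) ltac:(intros; apply H; lia)). pose proof (H n ltac:(lia)). lra.
Qed.
Lemma sumR_abs n f : Rabs (sumR n f) <= sumR n (fun k => Rabs (f k)).
Proof. induction n; simpl. rewrite Rabs_R0; lra. eapply Rle_trans; [apply Rabs_triang|lra]. Qed.

Lemma cs2 X Y P Q p q : 0 <= P -> 0 <= Q -> 0 <= p -> 0 <= q ->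
  X^2 <= P * Q -> Y^2 <= p * q -> (X + Y)^2 <= (P + p) * (Q + q).
Proof.
  intros HP HQ Hp Hq H1 H2.
  assert (2 * Rabs X * Rabs Y <= P * q + p * Q).
  { assert ((2 * Rabs X * Rabs Y)^2 <= (P * q + p * Q)^2).
    { replace ((2 * Rabs X * Rabs Y)^2) with (4 * (Rabs X)^2 * (Rabs Y)^2) by ring.
      rewrite !pow2_abs.
      assert (X^2 * Y^2 <= (P*Q)*(p*q)).
      { apply Rmult_le_compat; auto; apply pow2_ge_0. }
      pose proof (pow2_ge_0 (P*q - p*Q)). nra. }
    pose proof (Rabs_pos X); pose proof (Rabs_pos Y).
    apply Rsqr_incr_0_var; [unfold Rsqr; simpl in *; nra | nra]. }
  assert (X * Y <= Rabs X * Rabs Y).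
  { rewrite <- Rabs_mult. apply Rle_abs. }
  nra.
Qed.

Lemma sumR_CS n a P Q : (forall k, (k < n)%nat -> 0 <= P k /\ 0 <= Q k /\ (a k)^2 <= P k * Q k) ->
  (sumR n a)^2 <= sumR n P * sumR n Q.
Proof.
  induction n; simpl; intros H; [lra|].
  destruct (H n ltac:(lia)) as (h1 & h2 & h3).
  apply cs2; auto; try (apply sumR_nonneg; intros; apply H; lia).
Qed.

Lemma sq_abs_le X A B : 0 <= A -> 0 <= B -> X^2 <= A * B -> Rabs X <= sqrt A * sqrt B.
Proof.
  intros HA HB H. rewrite <- sqrt_mult by auto.
  rewrite <- (sqrt_pow2 (Rabs X)) by apply Rabs_pos.
  apply sqrt_le_1; [apply pow2_ge_0|nra|]. rewrite pow2_abs. auto.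
Qed.


Lemma dot_sym d x y : dot d x y = dot d y x.
Proof. unfold dot. apply sumR_ext; intros; ring. Qed.
Lemma dot_nonneg d x : 0 <= dot d x x.
Proof. unfold dot. apply sumR_nonneg; intros. nra. Qed.
Lemma dot_CS d x y : (dot d x y)^2 <= dot d x x * dot d y y.
Proof. unfold dot. apply sumR_CS. intros; repeat split; try nra. Qed.
Lemma coord_le d x c : (c < d)%nat -> (x c)^2 <= dot d x x.
Proof. intros. unfold dot. replace ((x c)^2) with (x c * x c) by ring.
  apply (sumR_term_le d (fun c => x c * x c) c); auto. intros; nra. Qed.
Lemma dot_ext d x x' y y' : (forall c, (c < d)%nat -> x c = x' c) -> (forall c, (c < d)%nat -> y c = y' c) ->
  dot d x y = dot d x' y'.
Proof. intros H1 H2. unfold dot. apply sumR_ext; intros. rewrite H1, H2; auto. Qed.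
Lemma dot_sub_l d x x' y : dot d (fun c => x c - x' c) y = dot d x y - dot d x' y.
Proof. unfold dot. rewrite <- sumR_minus. apply sumR_ext; intros; ring. Qed.
Lemma dot_sub_r d x y y' : dot d x (fun c => y c - y' c) = dot d x y - dot d x y'.
Proof. unfold dot. rewrite <- sumR_minus. apply sumR_ext; intros; ring. Qed.
Lemma dot_sum_r d m x G : dot d x (fun c => sumR m (fun j => G j c)) = sumR m (fun j => dot d x (G j)).
Proof. unfold dot. rewrite <- sumR_swap. apply sumR_ext; intros. rewrite <- sumR_scal. auto. Qed.
Lemma dot_sum_l d m x G : dot d (fun c => sumR m (fun j => G j c)) x = sumR m (fun j => dot d (G j) x).
Proof. rewrite dot_sym, dot_sum_r. apply sumR_ext; intros; apply dot_sym. Qed.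
Lemma dot_sum_sq d m G : dot d (fun c => sumR m (fun j => G j c)) (fun c => sumR m (fun j => G j c))
   <= INR m * sumR m (fun j => dot d (G j) (G j)).
Proof.
  unfold dot at 2. rewrite <- sumR_swap, <- sumR_scal. unfold dot.
  apply sumR_le; intros c Hc.
  pose proof (sumR_CS m (fun j => G j c) (fun _ => 1) (fun j => G j c * G j c)) as H.
  rewrite sumR_const in H. replace (sumR m (fun j => G j c) * sumR m (fun j => G j c)) with ((sumR m (fun j => G j c))^2) by ring.
  eapply Rle_trans; [apply H|]. intros; repeat split; nra. lra.
Qed.

Definition vsum d (T : simplex) (F : pt -> pt) : pt := fun c => sumR (S d) (fun j => F (T j) c).
Definition ssq d (T : simplex) (F G : pt -> pt) : R := sumR (S d) (fun j => dot d (F (T j)) (G (T j))).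

Lemma int_dot_eq d T F G : int_dot d T F G = vol d T / (INR (S d) * INR (S (S d))) *
   (ssq d T F G + dot d (vsum d T F) (vsum d T G)).
Proof. reflexivity. Qed.

Lemma vol_nonneg d T : 0 <= vol d T.
Proof. unfold vol. apply Rmult_le_pos. apply Rabs_pos. left. apply Rinv_0_lt_compat, lt_0_INR, Factorial.lt_O_fact. Qed.

Lemma wt_pos d T : 0 <= vol d T / (INR (S d) * INR (S (S d))).
Proof. apply Rmult_le_pos. apply vol_nonneg. left. apply Rinv_0_lt_compat. apply Rmult_lt_0_compat; apply lt_0_INR; lia. Qed.

Lemma ssq_nonneg d T F : 0 <= ssq d T F F.
Proof. apply sumR_nonneg; intros; apply dot_nonneg. Qed.

Lemma int_dot_nonneg d T F : 0 <= int_dot d T F F.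
Proof. rewrite int_dot_eq. apply Rmult_le_pos. apply wt_pos. pose proof (ssq_nonneg d T F). pose proof (dot_nonneg d (vsum d T F)). lra. Qed.

Lemma int_dot_CS d T F G : (int_dot d T F G)^2 <= int_dot d T F F * int_dot d T G G.
Proof.
  rewrite !int_dot_eq. set (w := vol d T / (INR (S d) * INR (S (S d)))).
  assert (0 <= w) by apply wt_pos.
  assert ((ssq d T F G + dot d (vsum d T F) (vsum d T G))^2 <= (ssq d T F F + dot d (vsum d T F) (vsum d T F)) * (ssq d T G G + dot d (vsum d T G) (vsum d T G))).
  { apply cs2; try apply ssq_nonneg; try apply dot_nonneg; try apply dot_CS.
    apply sumR_CS; intros; repeat split; try apply dot_nonneg; apply dot_CS. }
  replace ((w * (ssq d T F G + dot d (vsum d T F) (vsum d T G))) ^ 2) with (w^2 * (ssq d T F G + dot d (vsum d T F) (vsum d T G))^2) by ring.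
  replace (w * (ssq d T F F + dot d (vsum d T F) (vsum d T F)) * (w * (ssq d T G G + dot d (vsum d T G) (vsum d T G))))
    with (w^2 * ((ssq d T F F + dot d (vsum d T F) (vsum d T F)) * (ssq d T G G + dot d (vsum d T G) (vsum d T G)))) by ring.
  apply Rmult_le_compat_l; auto. apply pow2_ge_0.
Qed.

Lemma int_dot_ext d T F F' G G' : (forall j c, (j <= d)%nat -> (c < d)%nat -> F (T j) c = F' (T j) c) ->
  (forall j c, (j <= d)%nat -> (c < d)%nat -> G (T j) c = G' (T j) c) -> int_dot d T F G = int_dot d T F' G'.
Proof.
  intros H1 H2. unfold int_dot. f_equal. f_equal.
  - apply sumR_ext; intros. apply dot_ext; intros; [apply H1|apply H2]; lia.
  - apply dot_ext; intros; apply sumR_ext; intros; [apply H1|apply H2]; lia.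
Qed.

Lemma int_dot_sub_l d T F F' G : int_dot d T (fun x c => F x c - F' x c) G = int_dot d T F G - int_dot d T F' G.
Proof.
  unfold int_dot.
  rewrite (sumR_ext _ _ (fun j => dot d (F (T j)) (G (T j)) - dot d (F' (T j)) (G (T j)))) by (intros; apply dot_sub_l).
  rewrite sumR_minus.
  rewrite (dot_ext d _ (fun c => sumR (S d) (fun j => F (T j) c) - sumR (S d) (fun j => F' (T j) c)) _ (fun c => sumR (S d) (fun j => G (T j) c)))
   by (intros; try rewrite sumR_minus; auto).
  rewrite dot_sub_l. ring.
Qed.
Lemma int_dot_sym d T F G : int_dot d T F G = int_dot d T G F.
Proof. unfold int_dot. f_equal. f_equal. apply sumR_ext; intros; apply dot_sym. apply dot_sym. Qed.
Lemma int_dot_sub_r d T F G G' : int_dot d T F (fun x c => G x c - G' x c) = int_dot d T F G - int_dot d T F G'.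
Proof. rewrite int_dot_sym, int_dot_sub_l, (int_dot_sym d T G), (int_dot_sym d T G'). auto. Qed.

Lemma int_dot_Linf d T F m2 : 0 <= m2 -> (forall j, (j <= d)%nat -> dot d (F (T j)) (F (T j)) <= m2) ->
  int_dot d T F F <= vol d T * m2.
Proof.
  intros Hm H. rewrite int_dot_eq.
  assert (ssq d T F F <= INR (S d) * m2).
  { unfold ssq. rewrite <- sumR_const. apply sumR_le; intros; apply H; lia. }
  assert (dot d (vsum d T F) (vsum d T F) <= INR (S d) * (INR (S d) * m2)).
  { eapply Rle_trans. apply dot_sum_sq. apply Rmult_le_compat_l. apply pos_INR. auto. }
  pose proof (vol_nonneg d T).
  assert (0 < INR (S d)) by (apply lt_0_INR; lia).
  rewrite (S_INR (S d)).
  set (n1 := INR (S d)) in *. set (V := vol d T) in *.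
  apply Rle_trans with (V / (n1 * (n1 + 1)) * (n1 * m2 + n1 * (n1 * m2))).
  - apply Rmult_le_compat_l. apply Rmult_le_pos; auto. left; apply Rinv_0_lt_compat; nra. lra.
  - right. field. lra.
Qed.

Lemma vsum_sq_le d T F : dot d (vsum d T F) (vsum d T F) <= INR (S d) * ssq d T F F.
Proof. apply dot_sum_sq. Qed.

Lemma int_aff_bound d T Fv G : (int_aff d T (fun x => dot d Fv (G x)))^2 <= vol d T * dot d Fv Fv * int_dot d T G G.
Proof.
  unfold int_aff. rewrite <- (dot_sum_r d (S d) Fv (fun j => G (T j))). fold (vsum d T G).
  rewrite int_dot_eq.
  pose proof (vsum_sq_le d T G). pose proof (dot_CS d Fv (vsum d T G)).
  pose proof (vol_nonneg d T). pose proof (dot_nonneg d Fv). pose proof (dot_nonneg d (vsum d T G)).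
  assert (0 < INR (S d)) by (apply lt_0_INR; lia).
  rewrite (S_INR (S d)).
  set (n1 := INR (S d)) in *. set (V := vol d T) in *. set (A := dot d (vsum d T G) (vsum d T G)) in *.
  set (B := ssq d T G G) in *. set (X := dot d Fv (vsum d T G)) in *. set (Fn := dot d Fv Fv) in *.
  replace ((V / n1 * X)^2) with (V * V / (n1 * n1) * X^2) by (field; lra).
  apply Rle_trans with (V * V / (n1 * n1) * (Fn * A)).
  { apply Rmult_le_compat_l; auto. apply Rmult_le_pos. nra. left; apply Rinv_0_lt_compat; nra. }
  replace (V * Fn * (V / (n1 * (n1 + 1)) * (B + A))) with (V * V * Fn * (B + A) / (n1 * (n1+1))) by (field; lra).
  replace (V * V / (n1 * n1) * (Fn * A)) with (V * V * Fn * A / (n1 * n1)) by (field; lra).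
  assert (A * (n1 * (n1 + 1)) <= (B + A) * (n1 * n1)).
  { assert (0 <= n1 * (n1 * B - A)) by (apply Rmult_le_pos; lra).
    replace ((B + A) * (n1 * n1)) with (A * (n1 * (n1 + 1)) + n1 * (n1 * B - A)) by ring. lra. }
  assert (0 <= V * V * Fn) by (apply Rmult_le_pos; nra).
  unfold Rdiv. apply Rmult_le_reg_r with (n1 * n1 * (n1 * (n1 + 1))). repeat apply Rmult_lt_0_compat; lra.
  replace (V * V * Fn * A * / (n1 * n1) * (n1 * n1 * (n1 * (n1 + 1)))) with (V * V * Fn * (A * (n1 * (n1 + 1)))) by (field; lra).
  replace (V * V * Fn * (B + A) * / (n1 * (n1 + 1)) * (n1 * n1 * (n1 * (n1 + 1)))) with (V * V * Fn * ((B + A) * (n1 * n1))) by (field; lra).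
  apply Rmult_le_compat_l; auto.
Qed.

Lemma vertex_bound d T F j : (j <= d)%nat -> 0 < vol d T ->
  dot d (F (T j)) (F (T j)) <= INR (S d) * INR (S (S d)) / vol d T * int_dot d T F F.
Proof.
  intros Hj HV. rewrite int_dot_eq.
  assert (dot d (F (T j)) (F (T j)) <= ssq d T F F).
  { apply (sumR_term_le (S d) (fun j => dot d (F (T j)) (F (T j)))). lia. intros; apply dot_nonneg. }
  pose proof (dot_nonneg d (vsum d T F)).
  assert (0 < INR (S d)) by (apply lt_0_INR; lia).
  assert (0 < INR (S (S d))) by (apply lt_0_INR; lia).
  replace (INR (S d) * INR (S (S d)) / vol d T * (vol d T / (INR (S d) * INR (S (S d))) * (ssq d T F F + dot d (vsum d T F) (vsum d T F))))
    with (ssq d T F F + dot d (vsum d T F) (vsum d T F)) by (field; repeat split; lra).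
  lra.
Qed.


Definition Iel d M k (u v : rt) := int_dot d (elt M k) (rt_eval u k) (rt_eval v k).

Lemma ipW_nonneg d M w : 0 <= ipW d M w w.
Proof. unfold ipW. apply sumR_nonneg; intros. pose proof (vol_nonneg d (elt M k)).
  replace (vol d (elt M k) * w k * w k) with (vol d (elt M k) * (w k * w k)) by ring. apply Rmult_le_pos; nra. Qed.
Lemma Iel_nonneg d M k v : 0 <= Iel d M k v v.
Proof. apply int_dot_nonneg. Qed.
Lemma ipV_nonneg d M v : 0 <= ipV d M v v.
Proof. unfold ipV, ipVw. apply sumR_nonneg; intros. rewrite Rmult_1_l. apply int_dot_nonneg. Qed.
Lemma ipV_eq d M u v : ipV d M u v = sumR (nel M) (fun k => Iel d M k u v).
Proof. unfold ipV, ipVw. apply sumR_ext; intros. unfold Iel; ring. Qed.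

Lemma ipVw_CS d M g u v : (ipVw d M g u v)^2 <= sumR (nel M) (fun k => (g k)^2 * Iel d M k u u) * ipV d M v v.
Proof.
  rewrite ipV_eq. unfold ipVw. apply sumR_CS. intros k Hk. repeat split.
  - apply Rmult_le_pos. apply pow2_ge_0. apply Iel_nonneg.
  - apply Iel_nonneg.
  - replace ((g k * int_dot d (elt M k) (rt_eval u k) (rt_eval v k))^2) with ((g k)^2 * (Iel d M k u v)^2) by (unfold Iel; ring).
    rewrite Rmult_assoc. apply Rmult_le_compat_l. apply pow2_ge_0. apply int_dot_CS.
Qed.

Lemma ipVw_coer d M g v lo : (forall k, (k < nel M)%nat -> lo <= g k) -> lo * ipV d M v v <= ipVw d M g v v.
Proof.
  intros H. rewrite ipV_eq. rewrite <- sumR_scal. unfold ipVw. apply sumR_le; intros.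
  apply Rmult_le_compat_r. apply int_dot_nonneg. auto.
Qed.

Lemma ipFV_CS d M F v : (ipFV d M F v)^2 <= sumR (nel M) (fun k => vol d (elt M k) * dot d (F k) (F k)) * ipV d M v v.
Proof.
  rewrite ipV_eq. unfold ipFV. apply sumR_CS. intros k Hk. repeat split.
  - apply Rmult_le_pos. apply vol_nonneg. apply dot_nonneg.
  - apply Iel_nonneg.
  - apply int_aff_bound.
Qed.

Lemma rt_eval_sub v w k x c : rt_eval (rt_sub v w) k x c = rt_eval v k x c - rt_eval w k x c.
Proof. unfold rt_eval, rt_sub; simpl; ring. Qed.

Lemma ipVw_sub_l d M g u u' v : ipVw d M g (rt_sub u u') v = ipVw d M g u v - ipVw d M g u' v.
Proof. unfold ipVw. rewrite <- sumR_minus. apply sumR_ext; intros.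
  rewrite (int_dot_ext d _ _ (fun x c => rt_eval u k x c - rt_eval u' k x c) _ (rt_eval v k)) by (intros; try apply rt_eval_sub; auto).
  rewrite int_dot_sub_l. ring. Qed.
Lemma ipVw_sub_r d M g u v v' : ipVw d M g u (rt_sub v v') = ipVw d M g u v - ipVw d M g u v'.
Proof. unfold ipVw. rewrite <- sumR_minus. apply sumR_ext; intros.
  rewrite (int_dot_ext d _ _ (rt_eval u k) _ (fun x c => rt_eval v k x c - rt_eval v' k x c)) by (intros; try apply rt_eval_sub; auto).
  rewrite int_dot_sub_r. ring. Qed.
Lemma ipVw_sub_g d M g g' u v : ipVw d M (fun k => g k - g' k) u v = ipVw d M g u v - ipVw d M g' u v.
Proof. unfold ipVw. rewrite <- sumR_minus. apply sumR_ext; intros. ring. Qed.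
Lemma ipWdiv_sub_r d M w v v' : ipWdiv d M w (rt_sub v v') = ipWdiv d M w v - ipWdiv d M w v'.
Proof. unfold ipWdiv, divh. rewrite <- sumR_minus. apply sumR_ext; intros. simpl. ring. Qed.
Lemma ipWdiv_sub_l d M w w' v : ipWdiv d M (fun k => w k - w' k) v = ipWdiv d M w v - ipWdiv d M w' v.
Proof. unfold ipWdiv. rewrite <- sumR_minus. apply sumR_ext; intros. ring. Qed.
Lemma ipW_sub_l d M f g w : ipW d M (fun k => f k - g k) w = ipW d M f w - ipW d M g w.
Proof. unfold ipW. rewrite <- sumR_minus. apply sumR_ext; intros. ring. Qed.
Lemma ipFV_sub_F d M F F' v : ipFV d M (fun k c => F k c - F' k c) v = ipFV d M F v - ipFV d M F' v.
Proof. unfold ipFV, int_aff. rewrite <- sumR_minus. apply sumR_ext; intros.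
  rewrite <- Rmult_minus_distr_l, <- sumR_minus. f_equal. apply sumR_ext; intros. apply dot_sub_l. Qed.
Lemma ipFV_sub_v d M F v v' : ipFV d M F (rt_sub v v') = ipFV d M F v - ipFV d M F v'.
Proof. unfold ipFV, int_aff. rewrite <- sumR_minus. apply sumR_ext; intros.
  rewrite <- Rmult_minus_distr_l, <- sumR_minus. f_equal. apply sumR_ext; intros.
  rewrite <- dot_sub_r. apply dot_ext; intros; auto. apply rt_eval_sub. Qed.
Lemma divh_sub d v v' k : divh d (rt_sub v v') k = divh d v k - divh d v' k.
Proof. unfold divh, rt_sub; simpl; ring. Qed.

Lemma in_Vh_sub d M v v' : in_Vh d M v -> in_Vh d M v' -> in_Vh d M (rt_sub v v').
Proof.
  unfold in_Vh. intros H1 H2 k k' j0 Hk Hk' Hne Hj0 Hsh y Hy j Hj Hjj.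
  rewrite (dot_ext d y y _ (fun c => rt_eval v k (elt M k j) c - rt_eval v' k (elt M k j) c)) by (intros; auto; apply rt_eval_sub).
  rewrite (dot_ext d y y (rt_eval (rt_sub v v') k' (elt M k j)) (fun c => rt_eval v k' (elt M k j) c - rt_eval v' k' (elt M k j) c)) by (intros; auto; apply rt_eval_sub).
  rewrite !dot_sub_r. rewrite (H1 k k' j0), (H2 k k' j0); auto.
Qed.

Lemma ipWdiv_as_ipW d M w v : ipWdiv d M w v = ipW d M (fun k => divh d v k) w.
Proof. unfold ipWdiv, ipW. apply sumR_ext; intros; ring. Qed.

Definition ind (k0 : nat) : W := fun k => if Nat.eqb k k0 then 1 else 0.

Lemma ipW_ind d M f k0 : (k0 < nel M)%nat -> ipW d M f (ind k0) = vol d (elt M k0) * f k0.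
Proof.
  intros H. unfold ipW. rewrite (sumR_ind _ _ k0); auto.
  - unfold ind. rewrite Nat.eqb_refl. ring.
  - intros k Hk Hne. unfold ind. destruct (Nat.eqb_spec k k0); [lia|ring].
Qed.

Lemma W_point d M f g : (forall w, ipW d M f w = ipW d M g w) ->
  forall k, (k < nel M)%nat -> 0 < vol d (elt M k) -> f k = g k.
Proof.
  intros H k Hk HV. specialize (H (ind k)). rewrite !ipW_ind in H by auto.
  apply Rmult_eq_reg_l in H; auto. lra.
Qed.

Lemma ipW_coord d M w k : (k < nel M)%nat -> vol d (elt M k) * (w k)^2 <= ipW d M w w.
Proof.
  intros Hk. unfold ipW. replace (vol d (elt M k) * (w k)^2) with (vol d (elt M k) * w k * w k) by ring.
  apply (sumR_term_le _ (fun k => vol d (elt M k) * w k * w k) k); auto. intros. pose proof (vol_nonneg d (elt M k0)).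
  replace (vol d (elt M k0) * w k0 * w k0) with (vol d (elt M k0) * (w k0 * w k0)) by ring. apply Rmult_le_pos; nra.
Qed.

Lemma ipWdiv_zero d M w v : (forall k, (k < nel M)%nat -> divh d v k = 0) -> ipWdiv d M w v = 0.
Proof. intros H. unfold ipWdiv. rewrite <- (sumR_zero (nel M)). apply sumR_ext; intros. rewrite H; auto; ring. Qed.
Lemma ipWdiv_self d M w v : (forall k, (k < nel M)%nat -> divh d v k = w k) -> ipWdiv d M w v = ipW d M w w.
Proof. intros H. unfold ipWdiv, ipW. apply sumR_ext; intros. rewrite H; auto. Qed.
Lemma ipW_sym d M f g : ipW d M f g = ipW d M g f.
Proof. unfold ipW. apply sumR_ext; intros; ring. Qed.


Lemma bnd X P Q a b : 0 <= a -> 0 <= b -> X^2 <= P * Q -> 0 <= P -> 0 <= Q -> P <= a^2 -> Q <= b^2 -> Rabs X <= a * b.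
Proof.
  intros Ha Hb H HP HQ H1 H2.
  assert (X^2 <= (a*b)^2).
  { eapply Rle_trans; [apply H|]. replace ((a*b)^2) with (a^2 * b^2) by ring. apply Rmult_le_compat; auto. }
  assert (Rabs X * Rabs X = X^2) by (rewrite <- pow2_abs; ring).
  apply Rsqr_incr_0_var. unfold Rsqr. rewrite H3. simpl in H0. lra.
  apply Rmult_le_pos; auto.
Qed.

Lemma sqrt_le_sq x a : 0 <= a -> x <= a^2 -> sqrt x <= a.
Proof. intros Ha H. destruct (Rle_or_lt x 0). rewrite sqrt_neg_0; auto. rewrite <- (sqrt_pow2 a) by auto. apply sqrt_le_1; try lra. Qed.

Lemma div_U (U s al A Bc : R) : 0 < al -> 0 <= s -> 0 <= U -> 0 <= A -> 0 <= Bc ->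
  al * U^2 <= A * s * U + Bc * s^2 -> U <= (A / al + Bc / al + 1) * s.
Proof.
  intros Hal Hs HU HA HB H.
  set (al1 := A / al). set (be := Bc / al).
  assert (Hal1 : 0 <= al1) by (unfold al1; apply Rmult_le_pos; auto; left; apply Rinv_0_lt_compat; auto).
  assert (Hbe : 0 <= be) by (unfold be; apply Rmult_le_pos; auto; left; apply Rinv_0_lt_compat; auto).
  assert (H' : U^2 <= al1 * s * U + be * s^2).
  { unfold al1, be. apply Rmult_le_reg_l with al; auto.
    replace (al * (A / al * s * U + Bc / al * s ^ 2)) with (A * s * U + Bc * s^2) by (field; lra). auto. }
  destruct (Rle_or_lt U ((al1 + be + 1) * s)) as [|Hc]; auto.
  exfalso.
  assert (U * U > U * ((al1 + be + 1) * s)) by (apply Rmult_lt_compat_l; nra).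
  assert ((be + 1) * s * U >= (be+1) * s * ((be + 1) * s)) by (apply Rle_ge, Rmult_le_compat_l; nra).
  nra.
Qed.

Definition cu_of (a_lo a_hi C c2 cA cF : R) :=
  (a_hi * C * c2 + (cA + cF)) / a_lo + (cA + cF) * C * c2 / a_lo + 1.

Lemma ipVw_const_bound d M g u hi : 0 <= hi -> (forall k, (k < nel M)%nat -> (g k)^2 <= hi^2) ->
  sumR (nel M) (fun k => (g k)^2 * Iel d M k u u) <= hi^2 * ipV d M u u.
Proof.
  intros Hh H. rewrite ipV_eq, <- sumR_scal. apply sumR_le; intros. apply Rmult_le_compat_r. apply Iel_nonneg. auto.
Qed.

Lemma u_p_stab d M C a_lo a_hi c2 cA cF sg (uA uB : rt) (gA gB : W) (F3A F3B : nat -> pt) (pA pB : W) (f2d : W) :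
  0 < a_lo -> a_lo <= a_hi -> 0 < C -> 0 <= c2 -> 0 <= cA -> 0 <= cF -> 0 <= sg ->
  div_stable d M C -> in_Vh d M uA -> in_Vh d M uB ->
  (forall k, (k < nel M)%nat -> a_lo <= gA k <= a_hi) ->
  (forall v, in_Vh d M v -> ipVw d M gA uA v - ipWdiv d M pA v + ipFV d M F3A v = 0) ->
  (forall v, in_Vh d M v -> ipVw d M gB uB v - ipWdiv d M pB v + ipFV d M F3B v = 0) ->
  (forall k, (k < nel M)%nat -> divh d (rt_sub uA uB) k = f2d k) ->
  ipW d M f2d f2d <= (c2 * sg)^2 ->
  sumR (nel M) (fun k => (gA k - gB k)^2 * Iel d M k uB uB) <= (cA * sg)^2 ->
  sumR (nel M) (fun k => vol d (elt M k) * dot d (fun c => F3A k c - F3B k c) (fun c => F3A k c - F3B k c)) <= (cF * sg)^2 ->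
  ipV d M (rt_sub uA uB) (rt_sub uA uB) <= (cu_of a_lo a_hi C c2 cA cF * sg)^2 /\
  ipW d M (fun k => pA k - pB k) (fun k => pA k - pB k) <= (C * (a_hi * cu_of a_lo a_hi C c2 cA cF + cA + cF) * sg)^2.
Proof.
  intros Hlo Hlh HC Hc2 HcA HcF Hsg Hdiv HuA HuB Hg H4A H4B Hd2 Hf2 HgA HF3.
  set (du := rt_sub uA uB) in *.
  set (dg := fun k => gA k - gB k) in *.
  set (dF := fun k c => F3A k c - F3B k c) in *.
  assert (Hahi : 0 < a_hi) by lra.
  assert (HgAsq : forall k, (k < nel M)%nat -> (gA k)^2 <= a_hi^2).
  { intros k Hk. destruct (Hg k Hk). nra. }
  set (U := sqrt (ipV d M du du)).
  assert (HU0 : 0 <= U) by apply sqrt_pos.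
  assert (HUe : ipV d M du du = U^2) by (unfold U; rewrite pow2_sqrt; auto; apply ipV_nonneg).
  assert (B1 : forall v, Rabs (ipVw d M gA du v) <= (a_hi * U) * sqrt (ipV d M v v)).
  { intros v. apply (bnd _ (sumR (nel M) (fun k => (gA k)^2 * Iel d M k du du)) (ipV d M v v)).
    nra. apply sqrt_pos. apply ipVw_CS. apply sumR_nonneg; intros; apply Rmult_le_pos; [apply pow2_ge_0|apply Iel_nonneg].
    apply ipV_nonneg. eapply Rle_trans. apply (ipVw_const_bound d M gA du a_hi); [lra|exact HgAsq]. rewrite HUe. right; ring.
    rewrite pow2_sqrt; [lra|apply ipV_nonneg]. }
  assert (B2 : forall v, Rabs (ipVw d M dg uB v) <= (cA * sg) * sqrt (ipV d M v v)).
  { intros v. apply (bnd _ (sumR (nel M) (fun k => (dg k)^2 * Iel d M k uB uB)) (ipV d M v v)).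
    nra. apply sqrt_pos. apply ipVw_CS. apply sumR_nonneg; intros; apply Rmult_le_pos; [apply pow2_ge_0|apply Iel_nonneg].
    apply ipV_nonneg. auto. rewrite pow2_sqrt; [lra|apply ipV_nonneg]. }
  assert (B3 : forall v, Rabs (ipFV d M dF v) <= (cF * sg) * sqrt (ipV d M v v)).
  { intros v. apply (bnd _ (sumR (nel M) (fun k => vol d (elt M k) * dot d (dF k) (dF k))) (ipV d M v v)).
    nra. apply sqrt_pos. apply ipFV_CS. apply sumR_nonneg; intros; apply Rmult_le_pos; [apply vol_nonneg|apply dot_nonneg].
    apply ipV_nonneg. auto. rewrite pow2_sqrt; [lra|apply ipV_nonneg]. }
  assert (HduV : in_Vh d M du) by (apply in_Vh_sub; auto).
  assert (KEY : forall v, in_Vh d M v ->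
     ipVw d M gA du v + ipVw d M dg uB v - ipWdiv d M (fun k => pA k - pB k) v + ipFV d M dF v = 0).
  { intros v Hv. specialize (H4A v Hv). specialize (H4B v Hv).
    unfold du, dg, dF. rewrite ipVw_sub_l, ipVw_sub_g, ipWdiv_sub_l, ipFV_sub_F. lra. }
  destruct (Hdiv f2d) as (w0 & Hw0V & Hw0d & Hw0n).
  set (W0 := sqrt (ipV d M w0 w0)).
  assert (HW0 : W0 <= C * (c2 * sg)).
  { unfold W0. fold (normV d M w0). eapply Rle_trans; [apply Hw0n|]. apply Rmult_le_compat_l; [lra|].
    apply sqrt_le_sq; auto. nra. }
  assert (HW00 : 0 <= W0) by apply sqrt_pos.
  set (z := rt_sub du w0).
  assert (HzV : in_Vh d M z) by (apply in_Vh_sub; auto).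
  assert (Hz0 : ipWdiv d M (fun k => pA k - pB k) z = 0).
  { apply ipWdiv_zero. intros k Hk. unfold z. rewrite divh_sub. rewrite Hw0d, Hd2; auto. ring. }
  assert (Hcoer : a_lo * ipV d M du du <= ipVw d M gA du du) by (apply ipVw_coer; intros; apply Hg; auto).
  pose proof (KEY z HzV) as Kz. rewrite Hz0 in Kz. unfold z in Kz.
  rewrite !ipVw_sub_r, ipFV_sub_v in Kz.
  pose proof (B1 w0) as b1. pose proof (B2 du) as b2. pose proof (B2 w0) as b3. pose proof (B3 du) as b4. pose proof (B3 w0) as b5.
  fold U W0 in b1, b2, b3, b4, b5.
  assert (HUb : a_lo * U^2 <= (a_hi * C * c2 + (cA + cF)) * sg * U + ((cA + cF) * C * c2) * sg^2).
  { rewrite <- HUe.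
    pose proof (Rle_abs (ipVw d M gA du w0)). pose proof (Rle_abs (- ipVw d M dg uB du)). rewrite Rabs_Ropp in H0.
    pose proof (Rle_abs (ipVw d M dg uB w0)). pose proof (Rle_abs (- ipFV d M dF du)). rewrite Rabs_Ropp in H2.
    pose proof (Rle_abs (ipFV d M dF w0)).
    assert (a_hi * U * W0 <= a_hi * U * (C * (c2 * sg))) by (apply Rmult_le_compat_l; nra).
    assert (cA * sg * W0 <= cA * sg * (C * (c2 * sg))) by (apply Rmult_le_compat_l; nra).
    assert (cF * sg * W0 <= cF * sg * (C * (c2 * sg))) by (apply Rmult_le_compat_l; nra).
    rewrite HUe in *. nra. }
  assert (HUc : U <= cu_of a_lo a_hi C c2 cA cF * sg).
  { unfold cu_of. apply div_U; auto.
    assert (0 <= a_hi*C*c2) by (repeat apply Rmult_le_pos; lra); lra.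
    repeat apply Rmult_le_pos; lra. }
  split.
  { rewrite HUe. apply pow_incr. lra. }
  set (dp := fun k => pA k - pB k) in *.
  destruct (Hdiv dp) as (vp & HvpV & Hvpd & Hvpn).
  set (P := ipW d M dp dp).
  set (sP := sqrt P).
  assert (HsP0 : 0 <= sP) by apply sqrt_pos.
  assert (HPe : P = sP^2) by (unfold sP; rewrite pow2_sqrt; auto; apply ipW_nonneg).
  set (Vp := sqrt (ipV d M vp vp)).
  assert (HVp : Vp <= C * sP) by exact Hvpn.
  assert (HVp0 : 0 <= Vp) by apply sqrt_pos.
  pose proof (KEY vp HvpV) as Kp. rewrite (ipWdiv_self d M dp vp) in Kp by auto. fold P in Kp.
  pose proof (B1 vp) as b1'. pose proof (B2 vp) as b2'. pose proof (B3 vp) as b3'. fold Vp in b1', b2', b3'.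
  pose proof (Rle_abs (ipVw d M gA du vp)). pose proof (Rle_abs (ipVw d M dg uB vp)). pose proof (Rle_abs (ipFV d M dF vp)).
  set (cu := cu_of a_lo a_hi C c2 cA cF) in *.
  assert (HP1 : P <= (a_hi * U + cA * sg + cF * sg) * Vp) by nra.
  assert (HP2 : (a_hi * U + cA * sg + cF * sg) * Vp <= (a_hi * cu * sg + cA * sg + cF * sg) * (C * sP)).
  { apply Rmult_le_compat; nra. }
  assert (Hcu0 : 0 <= cu).
  { unfold cu, cu_of. assert (0 <= a_hi*C*c2) by (repeat apply Rmult_le_pos; lra).
    assert (0 <= (a_hi * C * c2 + (cA + cF)) / a_lo) by (apply Rmult_le_pos; [lra|left; apply Rinv_0_lt_compat; lra]).
    assert (0 <= (cA + cF) * C * c2 / a_lo) by (apply Rmult_le_pos; [repeat apply Rmult_le_pos; lra|left; apply Rinv_0_lt_compat; lra]).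
    lra. }
  set (Kq := C * (a_hi * cu + cA + cF) * sg).
  assert (HK0 : 0 <= Kq) by (unfold Kq; repeat apply Rmult_le_pos; nra).
  assert (HsP : sP^2 <= Kq * sP).
  { rewrite <- HPe. eapply Rle_trans; [apply HP1|]. eapply Rle_trans; [apply HP2|]. right. unfold Kq. ring. }
  assert (sP <= Kq) by nra.
  apply Rle_trans with (sP^2). lra. apply pow_incr. lra.
Qed.


Lemma energy d M C L tau rho (ThA ThB ThC : W) (qA qB : rt) (ds : W) (Rv : rt -> R) :
  0 < L -> 0 < tau -> 0 < C -> 0 <= rho ->
  div_stable d M C -> in_Vh d M qA -> in_Vh d M qB ->
  (forall k, (k < nel M)%nat -> L * ((ThA k - ThB k) - (ThB k - ThC k)) + ds k + tau * (divh d qA k - divh d qB k) = 0) ->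
  (forall k, (k < nel M)%nat -> (ds k)^2 <= L * ds k * (ThB k - ThC k)) ->
  (forall v, in_Vh d M v -> ipV d M (rt_sub qA qB) v - ipWdiv d M (fun k => ThA k - ThB k) v = Rv v) ->
  (forall v, Rabs (Rv v) <= rho * sqrt (ipW d M ds ds) * sqrt (ipV d M v v)) ->
  3 * L * rho^2 * tau <= 1 ->
  ipW d M (fun k => ThA k - ThB k) (fun k => ThA k - ThB k) <= 3 * C^2 * L / (3 * C^2 * L + tau) * ipW d M (fun k => ThB k - ThC k) (fun k => ThB k - ThC k) /\
  ipV d M (rt_sub qA qB) (rt_sub qA qB) <= (L / tau + rho^2 * L^2) * ipW d M (fun k => ThB k - ThC k) (fun k => ThB k - ThC k).
Proof.
  intros HL Htau HC Hrho Hdiv HqA HqB Hpt Hds H2 HR Hsmall.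
  set (e := fun k => ThA k - ThB k) in *.
  set (eb := fun k => ThB k - ThC k) in *.
  set (dq := rt_sub qA qB) in *.
  set (E := ipW d M e e). set (Eb := ipW d M eb eb). set (S := ipW d M ds ds). set (Q := ipV d M dq dq).
  set (Z := ipW d M e (fun k => L * eb k - ds k)).
  assert (Ha : tau * ipWdiv d M e dq = - L * E + Z).
  { unfold E, Z, ipWdiv, ipW. rewrite <- sumR_scal.
    replace (- L * sumR (nel M) (fun k => vol d (elt M k) * e k * e k)) with (sumR (nel M) (fun k => -L * (vol d (elt M k) * e k * e k))) by apply sumR_scal.
    rewrite <- sumR_plus. apply sumR_ext; intros k Hk. unfold dq. rewrite divh_sub.
    specialize (Hpt k Hk). fold (e k) (eb k) in Hpt.
    transitivity (vol d (elt M k) * e k * (tau * (divh d qA k - divh d qB k))). ring.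
    replace (tau * (divh d qA k - divh d qB k)) with (- (L * (e k - eb k) + ds k)) by lra. ring. }
  assert (Hb : 2 * L * Z <= L^2 * E + L^2 * Eb - S).
  { unfold Z, E, Eb, S, ipW. rewrite <- !sumR_scal, <- sumR_plus, <- sumR_minus. apply sumR_le; intros k Hk.
    specialize (Hds k Hk). fold (eb k) in Hds. pose proof (vol_nonneg d (elt M k)).
    assert (2 * L * (e k * (L * eb k - ds k)) <= L^2 * (e k * e k) + L^2 * (eb k * eb k) - ds k * ds k).
    { pose proof (pow2_ge_0 (L * e k - L * eb k + ds k)). nra. }
    replace (2 * L * (vol d (elt M k) * e k * (L * eb k - ds k))) with (vol d (elt M k) * (2 * L * (e k * (L * eb k - ds k)))) by ring.
    replace (L ^ 2 * (vol d (elt M k) * e k * e k) + L ^ 2 * (vol d (elt M k) * eb k * eb k) - vol d (elt M k) * ds k * ds k)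
      with (vol d (elt M k) * (L^2 * (e k * e k) + L^2 * (eb k * eb k) - ds k * ds k)) by ring.
    apply Rmult_le_compat_l; auto. }
  assert (HSEb : S <= L^2 * Eb).
  { unfold S, Eb, ipW. rewrite <- sumR_scal. apply sumR_le; intros k Hk.
    specialize (Hds k Hk). fold (eb k) in Hds. pose proof (vol_nonneg d (elt M k)).
    assert (ds k * ds k <= L^2 * (eb k * eb k)).
    { destruct (Req_dec (ds k) 0) as [Hz|Hz]. rewrite Hz. nra.
      assert (Rabs (ds k) <= L * Rabs (eb k)).
      { assert ((Rabs (ds k))^2 <= L * Rabs (ds k) * Rabs (eb k)).
        { rewrite pow2_abs. eapply Rle_trans; [apply Hds|]. replace (L * Rabs (ds k) * Rabs (eb k)) with (L * Rabs (ds k * eb k)) by (rewrite Rabs_mult; ring).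
          rewrite Rmult_assoc. apply Rmult_le_compat_l; [lra|apply Rle_abs]. }
        pose proof (Rabs_pos_lt _ Hz). nra. }
      assert (E1 : ds k * ds k = (Rabs (ds k))^2) by (rewrite pow2_abs; ring).
      assert (E2 : eb k * eb k = (Rabs (eb k))^2) by (rewrite pow2_abs; ring).
      rewrite E1, E2. pose proof (Rabs_pos (ds k)). nra. }
    replace (vol d (elt M k) * ds k * ds k) with (vol d (elt M k) * (ds k * ds k)) by ring.
    replace (L ^ 2 * (vol d (elt M k) * eb k * eb k)) with (vol d (elt M k) * (L^2 * (eb k * eb k))) by ring.
    apply Rmult_le_compat_l; auto. }
  assert (HdqV : in_Vh d M dq) by (apply in_Vh_sub; auto).
  set (sg := sqrt S). set (sq := sqrt Q). set (se := sqrt E).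
  assert (Hsg : 0 <= sg) by apply sqrt_pos. assert (Hsq : 0 <= sq) by apply sqrt_pos. assert (Hse : 0 <= se) by apply sqrt_pos.
  assert (HSe : S = sg^2) by (unfold sg; rewrite pow2_sqrt; auto; apply ipW_nonneg).
  assert (HQe : Q = sq^2) by (unfold sq; rewrite pow2_sqrt; auto; apply ipV_nonneg).
  assert (HEe : E = se^2) by (unfold se; rewrite pow2_sqrt; auto; apply ipW_nonneg).
  assert (HEb0 : 0 <= Eb) by apply ipW_nonneg.
  pose proof (H2 dq HdqV) as Hc. fold Q in Hc.
  pose proof (HR dq) as Hd. fold S Q sg sq in Hd.
  pose proof (Rle_abs (Rv dq)) as Hd'.
  assert (Hdag : L * tau * sq^2 + L^2 * se^2 <= L^2 * Eb - sg^2 + L * tau * rho^2 * sg^2).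
  { assert (2 * rho * sg * sq <= sq^2 + rho^2 * sg^2) by (pose proof (pow2_ge_0 (sq - rho * sg)); nra).
    assert (Rv dq <= rho * sg * sq) by lra.
    assert (2 * L * tau * Rv dq <= 2 * L * tau * (rho * sg * sq)) by (apply Rmult_le_compat_l; nra).
    rewrite <- HQe, <- HEe, <- HSe. rewrite <- HQe, <- HSe in H.
    assert (Hq : tau * Q = tau * Rv dq - L * E + Z) by (rewrite <- Hc, Rmult_minus_distr_l, Ha; ring).
    assert (Hq2 : 2 * L * (tau * Q) = 2 * L * tau * Rv dq - 2 * L^2 * E + 2 * L * Z) by (rewrite Hq; ring).
    assert (Hq3 : L * tau * (2 * rho * sg * sq) <= L * tau * (Q + rho^2 * S)) by (apply Rmult_le_compat_l; nra).
    replace (2 * L * tau * (rho * sg * sq)) with (L * tau * (2 * rho * sg * sq)) in H1 by ring.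
    replace (L * tau * Q) with ((2 * L * (tau * Q)) / 2) by field.
    replace (L * tau * rho^2 * S) with (L * tau * (Q + rho^2 * S) - L * tau * Q) by ring.
    replace (L * tau * Q) with ((2 * L * (tau * Q)) / 2) by field.
    lra. }
  destruct (Hdiv e) as (ve & HveV & Hved & Hven).
  pose proof (H2 ve HveV) as He. rewrite (ipWdiv_self d M e ve) in He by auto. fold E in He.
  set (sve := sqrt (ipV d M ve ve)) in *.
  assert (Hsve : sve <= C * se) by exact Hven.
  assert (Hsve0 : 0 <= sve) by apply sqrt_pos.
  assert (HI : Rabs (ipV d M dq ve) <= sq * sve).
  { apply (bnd _ Q (ipV d M ve ve)); auto. 
    - eapply Rle_trans. apply (ipVw_CS d M (fun _ => 1) dq ve). unfold ipV at 2. right. f_equal.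
      unfold Q. rewrite ipV_eq. apply sumR_ext; intros; ring.
    - apply ipV_nonneg. - apply ipV_nonneg. - lra.
    - unfold sve. rewrite pow2_sqrt; [lra|apply ipV_nonneg]. }
  pose proof (HR ve) as Hf. fold S sg sve in Hf.
  pose proof (Rle_abs (ipV d M dq ve)). pose proof (Rle_abs (- Rv ve)). rewrite Rabs_Ropp in H0.
  assert (HE1 : se^2 <= (sq + rho * sg) * (C * se)).
  { rewrite <- HEe. apply Rle_trans with ((sq + rho * sg) * sve). nra. apply Rmult_le_compat_l; nra. }
  assert (HE2 : se <= C * (sq + rho * sg)).
  { destruct (Req_dec se 0) as [Hz|Hz]. rewrite Hz. apply Rmult_le_pos; nra.
    apply Rmult_le_reg_r with se. lra. replace (C * (sq + rho * sg) * se) with ((sq + rho * sg) * (C * se)) by ring. nra. }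
  assert (HE3 : se^2 <= C^2 * (3/2 * sq^2 + 3 * rho^2 * sg^2)).
  { apply Rle_trans with ((C * (sq + rho * sg))^2). apply pow_incr; lra.
    pose proof (pow2_ge_0 (sq/2 - rho * sg)). pose proof (pow2_ge_0 C). 
    replace ((C * (sq + rho * sg)) ^ 2) with (C^2 * (sq + rho*sg)^2) by ring. apply Rmult_le_compat_l; nra. }
  split.
  -
    assert (HC2 : 0 < C^2) by nra.
    assert (Hq2 : 2 * se^2 / (3 * C^2) - 2 * rho^2 * sg^2 <= sq^2).
    { apply Rle_trans with (2 * (C^2 * (3/2 * sq^2 + 3 * rho^2 * sg^2)) / (3 * C^2) - 2 * rho^2 * sg^2).
      unfold Rdiv. apply Rplus_le_compat_r. apply Rmult_le_compat_r. left; apply Rinv_0_lt_compat; lra. lra.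
      right. field. lra. }
    assert (Hx : L^2 * se^2 + L * tau * (2 * se^2 / (3 * C^2)) <= L^2 * Eb).
    { assert (L * tau * (2 * se ^ 2 / (3 * C ^ 2) - 2 * rho ^ 2 * sg ^ 2) <= L * tau * sq^2) by (apply Rmult_le_compat_l; nra).
      assert (0 <= sg^2 * (1 - 3 * L * rho^2 * tau)) by (apply Rmult_le_pos; [apply pow2_ge_0|lra]). nra. }
    assert (Hy : se^2 * (3 * C^2 * L + 2 * tau) <= 3 * C^2 * L * Eb).
    { apply Rmult_le_reg_l with (L / (3 * C^2)). apply Rdiv_lt_0_compat; lra.
      replace (L / (3 * C ^ 2) * (se ^ 2 * (3 * C ^ 2 * L + 2 * tau))) with (L^2 * se^2 + L * tau * (2 * se^2 / (3 * C^2))) by (field; lra).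
      replace (L / (3 * C ^ 2) * (3 * C ^ 2 * L * Eb)) with (L^2 * Eb) by (field; lra). auto. }
    rewrite HEe. apply Rmult_le_reg_r with (3 * C^2 * L + tau). nra.
    replace (3 * C ^ 2 * L / (3 * C ^ 2 * L + tau) * Eb * (3 * C ^ 2 * L + tau)) with (3 * C^2 * L * Eb) by (field; nra).
    pose proof (pow2_ge_0 se). nra.
  - rewrite HQe. apply Rmult_le_reg_l with (L * tau). nra.
    replace (L * tau * ((L / tau + rho ^ 2 * L ^ 2) * Eb)) with (L^2 * Eb + L * tau * rho^2 * (L^2 * Eb)) by (field; lra).
    assert (L * tau * rho^2 * sg^2 <= L * tau * rho^2 * (L^2 * Eb)) by (apply Rmult_le_compat_l; [apply Rmult_le_pos; nra| lra]).
    pose proof (pow2_ge_0 se). nra.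
Qed.


Lemma Lip_sq f c x y : Lip f c -> (f x - f y)^2 <= c^2 * (x - y)^2.
Proof.
  intros H. specialize (H x y). pose proof (Rabs_pos (f x - f y)). pose proof (Rabs_pos (x - y)).
  rewrite <- (pow2_abs (f x - f y)), <- (pow2_abs (x - y)).
  replace (c^2 * Rabs (x-y)^2) with ((c * Rabs (x-y))^2) by ring. apply pow_incr; lra.
Qed.

Lemma LipV_sq d f c x y : LipV d f c -> dot d (fun k => f x k - f y k) (fun k => f x k - f y k) <= c^2 * (x - y)^2.
Proof.
  intros H. specialize (H x y). unfold enorm in H.
  pose proof (sqrt_pos (dot d (fun k => f x k - f y k) (fun k => f x k - f y k))).
  rewrite <- (pow2_sqrt (dot d _ _)) by apply dot_nonneg.
  rewrite <- (pow2_abs (x - y)).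
  replace (c^2 * Rabs (x-y)^2) with ((c * Rabs (x-y))^2) by ring. apply pow_incr; lra.
Qed.

Lemma vertex_in d (T : simplex) j : (j <= d)%nat -> in_simplex d T (T j).
Proof.
  intros Hj. exists (fun j' => if Nat.eqb j' j then 1 else 0). repeat split.
  - intros j' _. destruct (Nat.eqb j' j); lra.
  - rewrite (sumR_ind _ _ j) by (first [lia | intros k _ Hk; destruct (Nat.eqb_spec k j); [lia|auto]]). rewrite Nat.eqb_refl; auto.
  - intros c Hc. rewrite (sumR_ind _ _ j) by (first [lia | intros k _ Hk; destruct (Nat.eqb_spec k j); [lia|ring]]).
    rewrite Nat.eqb_refl; ring.
Qed.

Lemma Linf_Iel d M u Mu k : Linf_le d M u Mu -> (k < nel M)%nat -> Iel d M k u u <= vol d (elt M k) * Mu^2.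
Proof.
  intros H Hk. unfold Iel. apply int_dot_Linf. apply pow2_ge_0.
  intros j Hj. specialize (H k (elt M k j) Hk (vertex_in d _ j Hj)). unfold enorm in H.
  pose proof (sqrt_pos (dot d (rt_eval u k (elt M k j)) (rt_eval u k (elt M k j)))).
  rewrite <- (pow2_sqrt (dot d _ _)) by apply dot_nonneg. apply pow_incr; lra.
Qed.

Lemma sum_Lip d M f c (x y : W) :
  Lip f c -> ipW d M (fun k => f (x k) - f (y k)) (fun k => f (x k) - f (y k)) <= c^2 * ipW d M (fun k => x k - y k) (fun k => x k - y k).
Proof.
  intros H. unfold ipW. rewrite <- sumR_scal. apply sumR_le; intros k Hk. pose proof (vol_nonneg d (elt M k)).
  pose proof (Lip_sq f c (x k) (y k) H).
  replace (vol d (elt M k) * (f (x k) - f (y k)) * (f (x k) - f (y k))) with (vol d (elt M k) * (f (x k) - f (y k))^2) by ring.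
  replace (c ^ 2 * (vol d (elt M k) * (x k - y k) * (x k - y k))) with (vol d (elt M k) * (c^2 * (x k - y k)^2)) by ring.
  apply Rmult_le_compat_l; auto.
Qed.

Lemma sum_LipV d M f c (x y : W) :
  LipV d f c -> sumR (nel M) (fun k => vol d (elt M k) * dot d (fun cc => f (x k) cc - f (y k) cc) (fun cc => f (x k) cc - f (y k) cc))
   <= c^2 * ipW d M (fun k => x k - y k) (fun k => x k - y k).
Proof.
  intros H. unfold ipW. rewrite <- sumR_scal. apply sumR_le; intros k Hk. pose proof (vol_nonneg d (elt M k)).
  pose proof (LipV_sq d f c (x k) (y k) H).
  replace (c ^ 2 * (vol d (elt M k) * (x k - y k) * (x k - y k))) with (vol d (elt M k) * (c^2 * (x k - y k)^2)) by ring.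
  apply Rmult_le_compat_l; auto.
Qed.

Lemma sum_Lip_u d M f c (x y : W) u Mu :
  Lip f c -> Linf_le d M u Mu ->
  sumR (nel M) (fun k => (f (x k) - f (y k))^2 * Iel d M k u u) <= (c * Mu)^2 * ipW d M (fun k => x k - y k) (fun k => x k - y k).
Proof.
  intros H Hu. unfold ipW. rewrite <- sumR_scal. apply sumR_le; intros k Hk. pose proof (vol_nonneg d (elt M k)).
  pose proof (Lip_sq f c (x k) (y k) H). pose proof (Linf_Iel d M u Mu k Hu Hk). pose proof (Iel_nonneg d M k u).
  apply Rle_trans with (c^2 * (x k - y k)^2 * (vol d (elt M k) * Mu^2)).
  apply Rmult_le_compat; auto. apply pow2_ge_0.
  right. ring.
Qed.

Lemma mono_lip s Ls L x y : (forall x y, x <= y -> s x <= s y) -> Lip s Ls -> Ls <= L -> 0 <= Ls ->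
  (s x - s y)^2 <= L * (s x - s y) * (x - y).
Proof.
  intros Hm Hl HL Hs. specialize (Hl x y). destruct (Rle_or_lt x y) as [Hxy|Hxy].
  - pose proof (Hm x y Hxy). rewrite Rabs_left1 in Hl by lra. rewrite Rabs_left1 in Hl by lra.
    assert (-(s x - s y) <= L * (-(x - y))) by nra. nra.
  - pose proof (Hm y x ltac:(lra)). rewrite Rabs_right in Hl by lra. rewrite Rabs_right in Hl by lra.
    assert ((s x - s y) <= L * (x - y)) by nra. nra.
Qed.

Lemma ipW_add_scal d M f g t w : ipW d M (fun k => f k + t * g k) w = ipW d M f w + t * ipW d M g w.
Proof. unfold ipW. rewrite <- sumR_scal, <- sumR_plus. apply sumR_ext; intros; ring. Qed.

Definition cu_c a_lo a_hi C Mu La Lf2 Lf3 := cu_of a_lo a_hi C (Rabs Lf2) (Rabs La * Rabs Mu) (Rabs Lf3).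
Definition rho_c a_lo a_hi C Mu Fw La Lfw Lf1 Lf2 Lf3 :=
  Rabs Fw * cu_c a_lo a_hi C Mu La Lf2 Lf3 + Rabs Lfw * Rabs Mu + Rabs Lf1.
Definition cp_c a_lo a_hi C Mu La Lf2 Lf3 :=
  C * (a_hi * cu_c a_lo a_hi C Mu La Lf2 Lf3 + Rabs La * Rabs Mu + Rabs Lf3).

Lemma cu_nonneg a_lo a_hi C Mu La Lf2 Lf3 : 0 < a_lo -> a_lo <= a_hi -> 0 < C -> 0 <= cu_c a_lo a_hi C Mu La Lf2 Lf3.
Proof.
  intros. unfold cu_c, cu_of. pose proof (Rabs_pos Lf2). pose proof (Rabs_pos La). pose proof (Rabs_pos Mu). pose proof (Rabs_pos Lf3).
  assert (0 <= Rabs La * Rabs Mu) by (apply Rmult_le_pos; auto).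
  assert (0 <= a_hi * C * Rabs Lf2) by (repeat apply Rmult_le_pos; lra).
  assert (0 <= (a_hi * C * Rabs Lf2 + (Rabs La * Rabs Mu + Rabs Lf3)) / a_lo) by (apply Rmult_le_pos; [lra|left; apply Rinv_0_lt_compat; lra]).
  assert (0 <= (Rabs La * Rabs Mu + Rabs Lf3) * C * Rabs Lf2 / a_lo) by (apply Rmult_le_pos; [repeat apply Rmult_le_pos; lra|left; apply Rinv_0_lt_compat; lra]).
  lra.
Qed.

Lemma sq_sqrt_eq c S : 0 <= S -> (Rabs c * sqrt S)^2 = c^2 * S.
Proof. intros. rewrite Rpow_mult_distr, pow2_abs, pow2_sqrt; auto. Qed.

Lemma step d M s a fw f2 f1 f3 L Ls tau C a_lo a_hi Mu Fw La Lfw Lf1 Lf2 Lf3 (Th0 ThA ThB ThC pA pB : W) (qA qB uA uB : rt) :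
  0 < L -> 0 < tau -> 0 < C -> 0 < a_lo -> a_lo <= a_hi ->
  (forall x y, x <= y -> s x <= s y) -> 0 <= Ls -> Lip s Ls -> Ls <= L ->
  Lip a La -> (forall x, a_lo <= a x <= a_hi) -> LipV d f1 Lf1 -> Lip f2 Lf2 -> LipV d f3 Lf3 -> Lip fw Lfw ->
  (forall x, Rabs (fw x) <= Fw) ->
  (forall k, (k < nel M)%nat -> 0 < vol d (elt M k)) -> div_stable d M C ->
  Lscheme_step d M s a fw f2 f1 f3 L tau Th0 ThB ThA qA pA uA ->
  Lscheme_step d M s a fw f2 f1 f3 L tau Th0 ThC ThB qB pB uB ->
  Linf_le d M uB Mu ->
  3 * L * (rho_c a_lo a_hi C Mu Fw La Lfw Lf1 Lf2 Lf3)^2 * tau <= 1 ->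
  ipW d M (fun k => ThA k - ThB k) (fun k => ThA k - ThB k) <= 3 * C^2 * L / (3 * C^2 * L + tau) * ipW d M (fun k => ThB k - ThC k) (fun k => ThB k - ThC k) /\
  ipV d M (rt_sub qA qB) (rt_sub qA qB) <= (L / tau + (rho_c a_lo a_hi C Mu Fw La Lfw Lf1 Lf2 Lf3)^2 * L^2) * ipW d M (fun k => ThB k - ThC k) (fun k => ThB k - ThC k) /\
  ipV d M (rt_sub uA uB) (rt_sub uA uB) <= (cu_c a_lo a_hi C Mu La Lf2 Lf3 * L)^2 * ipW d M (fun k => ThB k - ThC k) (fun k => ThB k - ThC k) /\
  ipW d M (fun k => pA k - pB k) (fun k => pA k - pB k) <= (cp_c a_lo a_hi C Mu La Lf2 Lf3 * L)^2 * ipW d M (fun k => ThB k - ThC k) (fun k => ThB k - ThC k) /\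
  (forall k, (k < nel M)%nat -> tau * (divh d qA k - divh d qB k) = - (L * ((ThA k - ThB k) - (ThB k - ThC k)) + (s (ThB k) - s (ThC k)))) /\
  (forall k, (k < nel M)%nat -> divh d uA k - divh d uB k = f2 (s (ThB k)) - f2 (s (ThC k))).
Proof.
  intros HL Htau HC Hlo Hlh Hmono HLs0 HLs HLsL HLa Ha HLf1 HLf2 HLf3 HLfw HFw Hvol Hdiv HA HB HuB Hsmall.
  unfold Lscheme_step in HA, HB. cbv zeta in HA, HB.
  destruct HA as (HqA & HuA & H1A & H2A & H3A & H4A).
  destruct HB as (HqB & HuB' & H1B & H2B & H3B & H4B).
  set (ds := fun k => s (ThB k) - s (ThC k)).
  set (S := ipW d M ds ds).
  set (Eb := ipW d M (fun k => ThB k - ThC k) (fun k => ThB k - ThC k)).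
  assert (HS0 : 0 <= S) by apply ipW_nonneg.
  set (sg := sqrt S).
  assert (Hsg : 0 <= sg) by apply sqrt_pos.
  assert (Hds : forall k, (k < nel M)%nat -> (ds k)^2 <= L * ds k * (ThB k - ThC k)).
  { intros k Hk. unfold ds. apply (mono_lip s Ls); auto. }
  assert (HSEb : S <= L^2 * Eb).
  { unfold S, Eb, ipW. rewrite <- sumR_scal. apply sumR_le; intros k Hk. pose proof (vol_nonneg d (elt M k)).
    assert ((ds k)^2 <= L^2 * (ThB k - ThC k)^2).
    { unfold ds. eapply Rle_trans. apply (Lip_sq s Ls); auto. apply Rmult_le_compat_r. apply pow2_ge_0. nra. }
    replace (vol d (elt M k) * ds k * ds k) with (vol d (elt M k) * (ds k)^2) by ring.
    replace (L ^ 2 * (vol d (elt M k) * (ThB k - ThC k) * (ThB k - ThC k))) with (vol d (elt M k) * (L^2 * (ThB k - ThC k)^2)) by ring.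
    apply Rmult_le_compat_l; auto. }
  assert (P1 : forall (X Y : W) (q : rt), (forall w, ipW d M (fun k => L * (X k - Y k) + s (Y k)) w + tau * ipWdiv d M w q = ipW d M (fun k => s (Th0 k)) w) ->
     forall k, (k < nel M)%nat -> L * (X k - Y k) + s (Y k) + tau * divh d q k = s (Th0 k)).
  { intros X Y q H k Hk. apply (W_point d M (fun k => L * (X k - Y k) + s (Y k) + tau * divh d q k) (fun k => s (Th0 k))); auto.
    intros w. rewrite ipW_add_scal, <- H, ipWdiv_as_ipW. auto. }
  assert (Pq : forall k, (k < nel M)%nat -> tau * (divh d qA k - divh d qB k) = - (L * ((ThA k - ThB k) - (ThB k - ThC k)) + (s (ThB k) - s (ThC k)))).
  { intros k Hk. pose proof (P1 ThA ThB qA H1A k Hk). pose proof (P1 ThB ThC qB H1B k Hk). lra. }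
  assert (P3 : forall (Y : W) (u : rt), (forall w, ipWdiv d M w u = ipW d M (fun k => f2 (s (Y k))) w) ->
     forall k, (k < nel M)%nat -> divh d u k = f2 (s (Y k))).
  { intros Y u H k Hk. apply (W_point d M (fun k => divh d u k) (fun k => f2 (s (Y k)))); auto.
    intros w. rewrite <- H, ipWdiv_as_ipW. auto. }
  assert (Pu : forall k, (k < nel M)%nat -> divh d uA k - divh d uB k = f2 (s (ThB k)) - f2 (s (ThC k))).
  { intros k Hk. rewrite (P3 ThB uA H3A k Hk), (P3 ThC uB H3B k Hk). auto. }
  destruct (u_p_stab d M C a_lo a_hi (Rabs Lf2) (Rabs La * Rabs Mu) (Rabs Lf3) sg uA uB
     (fun k => a (s (ThB k))) (fun k => a (s (ThC k))) (fun k => f3 (s (ThB k))) (fun k => f3 (s (ThC k))) pA pB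
     (fun k => f2 (s (ThB k)) - f2 (s (ThC k)))) as [HU HP]; auto.
  { apply Rabs_pos. } { apply Rmult_le_pos; apply Rabs_pos. } { apply Rabs_pos. }
  { intros k Hk. rewrite divh_sub. auto. }
  { unfold sg. rewrite sq_sqrt_eq by auto. apply (sum_Lip d M f2 Lf2 (fun k => s (ThB k)) (fun k => s (ThC k))); auto. }
  { unfold sg. replace (Rabs La * Rabs Mu * sqrt S) with (Rabs (La*Mu) * sqrt S) by (rewrite Rabs_mult; ring). rewrite sq_sqrt_eq by auto. apply (sum_Lip_u d M a La (fun k => s (ThB k)) (fun k => s (ThC k))); auto. }
  { unfold sg. rewrite sq_sqrt_eq by auto. apply (sum_LipV d M f3 Lf3 (fun k => s (ThB k)) (fun k => s (ThC k))); auto. }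
  fold (cu_c a_lo a_hi C Mu La Lf2 Lf3) in HU, HP. fold (cp_c a_lo a_hi C Mu La Lf2 Lf3) in HP.
  set (cu := cu_c a_lo a_hi C Mu La Lf2 Lf3) in *.
  set (cp := cp_c a_lo a_hi C Mu La Lf2 Lf3) in *.
  assert (Hcu : 0 <= cu) by (apply cu_nonneg; auto).
  assert (HsgL : sg^2 <= L^2 * Eb) by (unfold sg; rewrite pow2_sqrt; auto).
  set (rho := rho_c a_lo a_hi C Mu Fw La Lfw Lf1 Lf2 Lf3) in *.
  assert (Hrho : 0 <= rho).
  { unfold rho, rho_c. fold cu. pose proof (Rabs_pos Fw). pose proof (Rabs_pos Lfw). pose proof (Rabs_pos Mu). pose proof (Rabs_pos Lf1).
    assert (0 <= Rabs Fw * cu) by (apply Rmult_le_pos; auto). assert (0 <= Rabs Lfw * Rabs Mu) by (apply Rmult_le_pos; auto). lra. }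
  set (Rv := fun v => ipVw d M (fun k => fw (s (ThB k))) (rt_sub uA uB) v + ipVw d M (fun k => fw (s (ThB k)) - fw (s (ThC k))) uB v
      + ipFV d M (fun k c => f1 (s (ThB k)) c - f1 (s (ThC k)) c) v).
  destruct (energy d M C L tau rho ThA ThB ThC qA qB ds Rv) as [HE HQ]; auto.
  { intros k Hk. rewrite Pq by auto. unfold ds. ring. }
  { intros v Hv. specialize (H2A v Hv). specialize (H2B v Hv). unfold Rv.
    unfold ipV. rewrite ipVw_sub_l, ipVw_sub_l, ipVw_sub_g, ipWdiv_sub_l, ipFV_sub_F. unfold ipV in H2A, H2B. cbv beta in H2A, H2B. change (ipFV d M (fun k c => f1 (s (ThB k)) c) v) with (ipFV d M (fun k => f1 (s (ThB k))) v). change (ipFV d M (fun k c => f1 (s (ThC k)) c) v) with (ipFV d M (fun k => f1 (s (ThC k))) v). lra. }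
  { intros v. fold S sg. unfold Rv.
    set (Nv := sqrt (ipV d M v v)). assert (0 <= Nv) by apply sqrt_pos.
    assert (HNv : ipV d M v v <= Nv^2) by (unfold Nv; rewrite pow2_sqrt; [lra|apply ipV_nonneg]).
    assert (b1 : Rabs (ipVw d M (fun k => fw (s (ThB k))) (rt_sub uA uB) v) <= (Rabs Fw * (cu * sg)) * Nv).
    { apply (bnd _ (sumR (nel M) (fun k => (fw (s (ThB k)))^2 * Iel d M k (rt_sub uA uB) (rt_sub uA uB))) (ipV d M v v)); auto.
      apply Rmult_le_pos; [apply Rabs_pos|nra]. apply ipVw_CS.
      apply sumR_nonneg; intros; apply Rmult_le_pos; [apply pow2_ge_0|apply Iel_nonneg]. apply ipV_nonneg.
      eapply Rle_trans. apply (ipVw_const_bound d M _ _ (Rabs Fw)). apply Rabs_pos.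
      intros k Hk. rewrite <- (pow2_abs (fw _)). apply pow_incr. split; [apply Rabs_pos|]. eapply Rle_trans; [apply HFw|apply Rle_abs].
      rewrite Rpow_mult_distr. apply Rmult_le_compat_l. apply pow2_ge_0. auto. }
    assert (b2 : Rabs (ipVw d M (fun k => fw (s (ThB k)) - fw (s (ThC k))) uB v) <= (Rabs Lfw * Rabs Mu * sg) * Nv).
    { apply (bnd _ (sumR (nel M) (fun k => (fw (s (ThB k)) - fw (s (ThC k)))^2 * Iel d M k uB uB)) (ipV d M v v)); auto.
      repeat apply Rmult_le_pos; auto; apply Rabs_pos. apply ipVw_CS.
      apply sumR_nonneg; intros; apply Rmult_le_pos; [apply pow2_ge_0|apply Iel_nonneg]. apply ipV_nonneg.
      unfold sg. replace (Rabs Lfw * Rabs Mu * sqrt S) with (Rabs (Lfw*Mu) * sqrt S) by (rewrite Rabs_mult; ring). rewrite sq_sqrt_eq by auto. apply (sum_Lip_u d M fw Lfw (fun k => s (ThB k)) (fun k => s (ThC k))); auto. }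
    assert (b3 : Rabs (ipFV d M (fun k c => f1 (s (ThB k)) c - f1 (s (ThC k)) c) v) <= (Rabs Lf1 * sg) * Nv).
    { apply (bnd _ (sumR (nel M) (fun k => vol d (elt M k) * dot d (fun c => f1 (s (ThB k)) c - f1 (s (ThC k)) c) (fun c => f1 (s (ThB k)) c - f1 (s (ThC k)) c))) (ipV d M v v)); auto.
      apply Rmult_le_pos; [apply Rabs_pos|auto]. apply ipFV_CS.
      apply sumR_nonneg; intros; apply Rmult_le_pos; [apply vol_nonneg|apply dot_nonneg]. apply ipV_nonneg.
      unfold sg. rewrite sq_sqrt_eq by auto. apply (sum_LipV d M f1 Lf1 (fun k => s (ThB k)) (fun k => s (ThC k))); auto. }
    eapply Rle_trans. apply Rabs_triang. eapply Rle_trans. apply Rplus_le_compat_r. apply Rabs_triang.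
    unfold rho, rho_c. fold cu. fold Nv. nra. }
  split; [exact HE|]. split; [exact HQ|]. split.
  { eapply Rle_trans; [apply HU|]. replace ((cu * L)^2 * Eb) with (cu^2 * (L^2 * Eb)) by ring.
    rewrite Rpow_mult_distr. apply Rmult_le_compat_l; auto. apply pow2_ge_0. }
  split.
  { eapply Rle_trans; [apply HP|]. fold cp. replace ((cp * L)^2 * Eb) with (cp^2 * (L^2 * Eb)) by ring.
    rewrite Rpow_mult_distr. apply Rmult_le_compat_l; auto. apply pow2_ge_0. }
  split; auto.
Qed.


Lemma ex_lim_aux (x : nat -> R) : exists l, (exists l', Un_cv x l') -> Un_cv x l.
Proof.
  destruct (classic (exists l', Un_cv x l')) as [[l' H]|H].
  - exists l'; auto.
  - exists 0; intro; contradiction.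
Qed.
Definition limR (x : nat -> R) : R := proj1_sig (constructive_indefinite_description _ (ex_lim_aux x)).
Lemma limR_spec x : (exists l, Un_cv x l) -> Un_cv x (limR x).
Proof. unfold limR. destruct (constructive_indefinite_description _ (ex_lim_aux x)); simpl; auto. Qed.

Lemma cv_const c : Un_cv (fun _ => c) c.
Proof. intros e He. exists O. intros. unfold Rdist. rewrite Rminus_diag, Rabs_R0; auto. Qed.
Lemma cv_ext x y l : (forall i, x i = y i) -> Un_cv x l -> Un_cv y l.
Proof. intros H Hx e He. destruct (Hx e He) as [N HN]. exists N. intros. rewrite <- H. auto. Qed.
Lemma cv_shift x l : Un_cv x l -> Un_cv (fun i => x (S i)) l.
Proof. intros Hx e He. destruct (Hx e He) as [N HN]. exists N. intros. apply HN. lia. Qed.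
Lemma cv_unshift x l : Un_cv (fun i => x (S i)) l -> Un_cv x l.
Proof. intros Hx e He. destruct (Hx e He) as [N HN]. exists (S N). intros n Hn. destruct n. lia. apply HN. lia. Qed.
Lemma cv_eq a b la lb : (forall i, a i = b i) -> Un_cv a la -> Un_cv b lb -> la = lb.
Proof. intros H Ha Hb. apply (UL_sequence b); auto. apply (cv_ext a); auto. Qed.
Lemma cv_sumR n (F : nat -> nat -> R) G : (forall k, (k < n)%nat -> Un_cv (fun i => F i k) (G k)) ->
  Un_cv (fun i => sumR n (F i)) (sumR n G).
Proof.
  induction n; intros H; simpl. apply cv_const.
  apply CV_plus. apply IHn; intros; apply H; lia. apply H; lia.
Qed.
Lemma cv_lip f c x l : Lip f c -> Un_cv x l -> Un_cv (fun i => f (x i)) (f l).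
Proof.
  intros Hf Hx e He. destruct (Hx (e / (Rabs c + 1))) as [N HN].
  { apply Rdiv_lt_0_compat; auto. pose proof (Rabs_pos c); lra. }
  exists N. intros n Hn. specialize (HN n Hn). unfold Rdist in *. eapply Rle_lt_trans. apply Hf.
  pose proof (Rabs_pos c). pose proof (Rabs_pos (x n - l)).
  apply Rle_lt_trans with (Rabs c * Rabs (x n - l)). apply Rmult_le_compat_r; auto. apply Rle_abs.
  apply Rle_lt_trans with ((Rabs c + 1) * Rabs (x n - l)). nra.
  replace e with ((Rabs c + 1) * (e / (Rabs c + 1))) by (field; lra). apply Rmult_lt_compat_l; lra.
Qed.
Lemma coord_abs d x c : (c < d)%nat -> Rabs (x c) <= enorm d x.
Proof.
  intros Hc. unfold enorm. rewrite <- (sqrt_pow2 (Rabs (x c))) by apply Rabs_pos. apply sqrt_le_1. apply pow2_ge_0. apply dot_nonneg.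
  rewrite pow2_abs. apply coord_le; auto.
Qed.
Lemma cv_lipV d f c x l c0 : LipV d f c -> (c0 < d)%nat -> Un_cv x l -> Un_cv (fun i => f (x i) c0) (f l c0).
Proof.
  intros Hf Hc Hx. apply (cv_lip (fun y => f y c0) c); auto.
  intros y z. eapply Rle_trans; [|apply Hf]. apply (coord_abs d (fun k => f y k - f z k)); auto.
Qed.
Lemma cv_sqrt0 x : (forall i, 0 <= x i) -> Un_cv x 0 -> Un_cv (fun i => sqrt (x i)) 0.
Proof.
  intros H0 Hx e He. destruct (Hx (e * e)) as [N HN]. nra. exists N. intros n Hn. specialize (HN n Hn).
  unfold Rdist in *. rewrite Rminus_0_r in *. rewrite Rabs_pos_eq in * by (auto; apply sqrt_pos).
  destruct (Rle_or_lt e (sqrt (x n))) as [Hc|Hc]; auto. exfalso.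
  assert (e * e <= sqrt (x n) * sqrt (x n)) by nra. rewrite sqrt_sqrt in H by auto. lra.
Qed.

Lemma pow_le1 r m : 0 <= r <= 1 -> r ^ m <= 1.
Proof. intros Hr. induction m; simpl. lra. assert (0 <= r^m) by (apply pow_le; lra). nra. Qed.
Lemma sqrt_pow_ r m : 0 <= r -> sqrt (r ^ m) = sqrt r ^ m.
Proof. intros Hr. induction m; simpl. apply sqrt_1. rewrite sqrt_mult by (auto; apply pow_le; auto). rewrite IHm; auto. Qed.

Lemma geo_partial (y : nat -> R) B rh : 0 <= B -> 0 <= rh < 1 -> (forall m, Rabs (y (S m) - y m) <= B * rh^m) ->
  forall n k, Rabs (y (n + k)%nat - y n) <= B * rh^n * (1 - rh^k) / (1 - rh).
Proof.
  intros HB Hr H n k. induction k.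
  - rewrite Nat.add_0_r. unfold Rminus. rewrite Rplus_opp_r, Rabs_R0. simpl. right. field. lra.
  - replace (n + S k)%nat with (S (n + k)) by lia.
    replace (y (S (n + k)) - y n) with ((y (S (n + k)) - y (n + k)%nat) + (y (n + k)%nat - y n)) by ring.
    eapply Rle_trans. apply Rabs_triang. specialize (H (n + k)%nat). rewrite pow_add in H.
    apply Rle_trans with (B * (rh ^ n * rh ^ k) + B * rh ^ n * (1 - rh ^ k) / (1 - rh)). lra.
    right. simpl. field. lra.
Qed.

Lemma geo_cv (x : nat -> R) A r : 0 <= A -> 0 <= r < 1 -> (forall m, (x (S (S m)) - x (S m))^2 <= A * r^m) ->
  exists l, Un_cv x l.
Proof.
  intros HA Hr H.
  set (rh := sqrt r). set (B := sqrt A).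
  assert (Hrh : 0 <= rh < 1).
  { split. apply sqrt_pos. unfold rh. rewrite <- sqrt_1. apply sqrt_lt_1_alt. lra. }
  assert (HB : 0 <= B) by apply sqrt_pos.
  set (y := fun m => x (S m)).
  assert (Hy : forall m, Rabs (y (S m) - y m) <= B * rh^m).
  { intros m. unfold y. rewrite <- (sqrt_pow2 (Rabs _)) by apply Rabs_pos. rewrite pow2_abs.
    unfold B, rh. rewrite <- sqrt_pow_ by lra. rewrite <- sqrt_mult by (try lra; apply pow_le; lra).
    apply sqrt_le_1. apply pow2_ge_0. apply Rmult_le_pos; auto; apply pow_le; lra. apply H. }
  assert (Hc : Cauchy_crit y).
  { intros e He.
    destruct (pow_lt_1_zero rh ltac:(rewrite Rabs_pos_eq; lra) (e * (1 - rh) / (B + 1))) as [N HN].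
    { apply Rdiv_lt_0_compat; [apply Rmult_lt_0_compat|]; lra. }
    exists N. intros n m Hn Hm. unfold Rdist.
    assert (Hgen : forall a b, (a >= N)%nat -> (b >= a)%nat -> Rabs (y b - y a) < e).
    { intros a b Ha Hb. replace b with (a + (b - a))%nat by lia.
      eapply Rle_lt_trans. apply (geo_partial y B rh HB Hrh Hy).
      specialize (HN a Ha). rewrite Rabs_pos_eq in HN by (apply pow_le; lra).
      assert (0 <= rh ^ (b - a)) by (apply pow_le; lra).
      assert (rh ^ (b - a) <= 1) by (apply pow_le1; lra).
      assert (0 <= rh^a) by (apply pow_le; lra).
      apply Rle_lt_trans with (B * rh ^ a / (1 - rh)).
      { unfold Rdiv. apply (Rmult_le_compat_r (/(1-rh))). left; apply Rinv_0_lt_compat; lra. assert (0 <= B * rh^a) by (apply Rmult_le_pos; lra). nra. }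
      apply Rmult_lt_reg_r with (1 - rh). lra. unfold Rdiv. rewrite Rmult_assoc, Rinv_l, Rmult_1_r by lra.
      apply Rle_lt_trans with ((B + 1) * rh ^ a). nra.
      apply Rmult_lt_reg_l with (/ (B + 1)). apply Rinv_0_lt_compat; lra.
      rewrite <- Rmult_assoc, Rinv_l, Rmult_1_l by lra. replace (/ (B + 1) * (e * (1 - rh))) with (e * (1 - rh) / (B + 1)) by (field; lra). auto. }
    destruct (Nat.le_ge_cases n m). rewrite Rabs_minus_sym. apply Hgen; lia. apply Hgen; lia. }
  destruct (R_complete y Hc) as [l Hl]. exists l. apply cv_unshift. exact Hl.
Qed.


Definition RTcv d M (v : nat -> rt) (vs : rt) := forall k, (k < nel M)%nat ->
  Un_cv (fun i => rtb (v i) k) (rtb vs k) /\ forall c, (c < d)%nat -> Un_cv (fun i => rta (v i) k c) (rta vs k c).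

Lemma RTcv_const d M v : RTcv d M (fun _ => v) v.
Proof. intros k Hk. split. apply cv_const. intros; apply cv_const. Qed.

Lemma rt_eval_cv d M v vs k x c : RTcv d M v vs -> (k < nel M)%nat -> (c < d)%nat ->
  Un_cv (fun i => rt_eval (v i) k x c) (rt_eval vs k x c).
Proof. intros H Hk Hc. destruct (H k Hk) as [Hb Ha]. unfold rt_eval. apply CV_plus. auto. apply CV_mult; auto. apply cv_const. Qed.

Lemma dot_cv d (X Y : nat -> pt) Xs Ys : (forall c, (c < d)%nat -> Un_cv (fun i => X i c) (Xs c)) ->
  (forall c, (c < d)%nat -> Un_cv (fun i => Y i c) (Ys c)) -> Un_cv (fun i => dot d (X i) (Y i)) (dot d Xs Ys).
Proof. intros H1 H2. unfold dot. apply (cv_sumR d (fun i c => X i c * Y i c)). intros; apply CV_mult; auto. Qed.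

Lemma int_dot_cv d T (F G : nat -> pt -> pt) Fs Gs :
  (forall j c, (j <= d)%nat -> (c < d)%nat -> Un_cv (fun i => F i (T j) c) (Fs (T j) c)) ->
  (forall j c, (j <= d)%nat -> (c < d)%nat -> Un_cv (fun i => G i (T j) c) (Gs (T j) c)) ->
  Un_cv (fun i => int_dot d T (F i) (G i)) (int_dot d T Fs Gs).
Proof.
  intros H1 H2. unfold int_dot. apply CV_mult. apply cv_const. apply CV_plus.
  - apply (cv_sumR (S d) (fun i j => dot d (F i (T j)) (G i (T j)))). intros j Hj. apply dot_cv; intros; [apply H1|apply H2]; auto; lia.
  - apply dot_cv; intros c Hc; apply (cv_sumR (S d) (fun i j => _ i (T j) c)); intros; [apply H1|apply H2]; auto; lia.
Qed.

Lemma ipVw_cv d M (g : nat -> W) gs u us v vs : (forall k, (k < nel M)%nat -> Un_cv (fun i => g i k) (gs k)) ->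
  RTcv d M u us -> RTcv d M v vs -> Un_cv (fun i => ipVw d M (g i) (u i) (v i)) (ipVw d M gs us vs).
Proof.
  intros Hg Hu Hv. unfold ipVw. apply (cv_sumR _ (fun i k => g i k * int_dot d (elt M k) (rt_eval (u i) k) (rt_eval (v i) k))).
  intros k Hk. apply CV_mult; auto. apply (int_dot_cv d (elt M k) (fun i => rt_eval (u i) k) (fun i => rt_eval (v i) k)); intros; apply (rt_eval_cv d M); auto.
Qed.
Lemma ipV_cv d M u us v vs : RTcv d M u us -> RTcv d M v vs -> Un_cv (fun i => ipV d M (u i) (v i)) (ipV d M us vs).
Proof. intros. unfold ipV. apply (ipVw_cv d M (fun _ _ => 1)); auto. intros; apply cv_const. Qed.
Lemma ipW_cv d M (f w : nat -> W) fs ws : (forall k, (k < nel M)%nat -> Un_cv (fun i => f i k) (fs k)) ->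
  (forall k, (k < nel M)%nat -> Un_cv (fun i => w i k) (ws k)) -> Un_cv (fun i => ipW d M (f i) (w i)) (ipW d M fs ws).
Proof. intros. unfold ipW. apply (cv_sumR _ (fun i k => vol d (elt M k) * f i k * w i k)). intros. repeat apply CV_mult; auto; apply cv_const. Qed.
Lemma ipWdiv_cv d M (w : nat -> W) ws v vs : (forall k, (k < nel M)%nat -> Un_cv (fun i => w i k) (ws k)) ->
  RTcv d M v vs -> Un_cv (fun i => ipWdiv d M (w i) (v i)) (ipWdiv d M ws vs).
Proof. intros Hw Hv. unfold ipWdiv, divh. apply (cv_sumR _ (fun i k => vol d (elt M k) * w i k * (INR d * rtb (v i) k))). intros k Hk.
  repeat apply CV_mult; auto; try apply cv_const. apply Hv; auto. Qed.
Lemma ipFV_cv d M (F : nat -> nat -> pt) Fs v vs : (forall k c, (k < nel M)%nat -> (c < d)%nat -> Un_cv (fun i => F i k c) (Fs k c)) ->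
  RTcv d M v vs -> Un_cv (fun i => ipFV d M (F i) (v i)) (ipFV d M Fs vs).
Proof.
  intros HF Hv. unfold ipFV, int_aff.
  apply (cv_sumR _ (fun i k => vol d (elt M k) / INR (S d) * sumR (S d) (fun j => dot d (F i k) (rt_eval (v i) k (elt M k j))))).
  intros k Hk. apply CV_mult. apply cv_const. apply (cv_sumR _ (fun i j => dot d (F i k) (rt_eval (v i) k (elt M k j)))).
  intros j Hj. apply dot_cv; intros; auto. apply (rt_eval_cv d M); auto.
Qed.

Lemma in_Vh_lim d M v vs : RTcv d M v vs -> (forall i, in_Vh d M (v i)) -> in_Vh d M vs.
Proof.
  intros Hc Hv k k' j0 Hk Hk' Hne Hj0 Hsh y Hy j Hj Hjj.
  apply (cv_eq (fun i => dot d y (rt_eval (v i) k (elt M k j))) (fun i => dot d y (rt_eval (v i) k' (elt M k j)))).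
  - intros i. apply (Hv i k k' j0); auto.
  - apply (dot_cv d (fun _ => y)); intros; [apply cv_const|apply (rt_eval_cv d M); auto].
  - apply (dot_cv d (fun _ => y)); intros; [apply cv_const|apply (rt_eval_cv d M); auto].
Qed.

Definition rt0 : rt := {| rta := fun _ _ => 0; rtb := fun _ => 0 |}.
Lemma dot_rt0 d k x y : dot d (rt_eval rt0 k x) y = 0.
Proof. unfold dot. rewrite <- (sumR_zero d). apply sumR_ext; intros. unfold rt_eval, rt0; simpl; ring. Qed.
Lemma ipV_rt0 d M : ipV d M rt0 rt0 = 0.
Proof.
  unfold ipV, ipVw. rewrite <- (sumR_zero (nel M)). apply sumR_ext; intros k Hk.
  unfold int_dot. rewrite (sumR_ext (S d) _ (fun _ => 0)) by (intros; apply dot_rt0).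
  rewrite (dot_ext d _ (fun _ => 0) _ (fun _ => 0)).
  - assert (Hz : dot d (fun _ : nat => 0) (fun _ : nat => 0) = 0).
    { unfold dot. transitivity (sumR d (fun _ => 0)); [apply sumR_ext; intros; ring|apply sumR_zero]. }
    rewrite Hz, sumR_zero. ring.
  - intros. transitivity (sumR (S d) (fun _ => 0)); [apply sumR_ext; intros; unfold rt_eval, rt0; simpl; ring|apply sumR_zero].
  - intros. transitivity (sumR (S d) (fun _ => 0)); [apply sumR_ext; intros; unfold rt_eval, rt0; simpl; ring|apply sumR_zero].
Qed.
Lemma ipW_zero d M : ipW d M (fun _ => 0) (fun _ => 0) = 0.
Proof. unfold ipW. transitivity (sumR (nel M) (fun _ => 0)); [apply sumR_ext; intros; ring|apply sumR_zero]. Qed.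


Lemma rta_bound d M v k c : (k < nel M)%nat -> (c < d)%nat -> 0 < vol d (elt M k) ->
  (rta v k c)^2 <= 2 * (INR (S d) * INR (S (S d)) / vol d (elt M k) * ipV d M v v + (elt M k O c)^2 * (rtb v k)^2).
Proof.
  intros Hk Hc HV.
  assert (E : rta v k c = rt_eval v k (elt M k O) c - rtb v k * elt M k O c) by (unfold rt_eval; ring).
  rewrite E.
  assert (H1 : (rt_eval v k (elt M k O) c)^2 <= INR (S d) * INR (S (S d)) / vol d (elt M k) * ipV d M v v).
  { eapply Rle_trans. apply (coord_le d); auto. eapply Rle_trans. apply (vertex_bound d (elt M k) (rt_eval v k) O); [lia|auto].
    apply Rmult_le_compat_l. apply Rmult_le_pos. apply Rmult_le_pos; apply pos_INR. left; apply Rinv_0_lt_compat; auto.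
    rewrite ipV_eq. apply (sumR_term_le _ (fun k => Iel d M k v v) k); auto. intros; apply Iel_nonneg. }
  pose proof (pow2_ge_0 (rt_eval v k (elt M k O) c + rtb v k * elt M k O c)). nra.
Qed.

Lemma W_geo d M (w : nat -> W) A r : 0 <= A -> 0 <= r < 1 -> (forall k, (k < nel M)%nat -> 0 < vol d (elt M k)) ->
  (forall m, ipW d M (fun k => w (S (S m)) k - w (S m) k) (fun k => w (S (S m)) k - w (S m) k) <= A * r^m) ->
  exists ws : W, forall k, (k < nel M)%nat -> Un_cv (fun i => w i k) (ws k).
Proof.
  intros HA Hr Hvol H. exists (fun k => limR (fun i => w i k)). intros k Hk. apply limR_spec.
  apply (geo_cv _ (A / vol d (elt M k)) r); auto. apply Rmult_le_pos; auto. left; apply Rinv_0_lt_compat; auto.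
  intros m. pose proof (ipW_coord d M (fun k => w (S (S m)) k - w (S m) k) k Hk). specialize (H m). specialize (Hvol k Hk).
  apply Rmult_le_reg_l with (vol d (elt M k)); auto. simpl in H0.
  replace (vol d (elt M k) * (A / vol d (elt M k) * r ^ m)) with (A * r^m) by (field; lra). lra.
Qed.

Lemma RT_geo d M (v : nat -> rt) A (B : nat -> R) r : 0 <= A -> (forall k, (k < nel M)%nat -> 0 <= B k) -> 0 <= r < 1 ->
  (forall k, (k < nel M)%nat -> 0 < vol d (elt M k)) ->
  (forall m, ipV d M (rt_sub (v (S (S m))) (v (S m))) (rt_sub (v (S (S m))) (v (S m))) <= A * r^m) ->
  (forall m k, (k < nel M)%nat -> (rtb (v (S (S m))) k - rtb (v (S m)) k)^2 <= B k * r^m) ->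
  exists vs, RTcv d M v vs.
Proof.
  intros HA HB Hr Hvol HV Hb.
  exists {| rta := fun k c => limR (fun i => rta (v i) k c); rtb := fun k => limR (fun i => rtb (v i) k) |}.
  intros k Hk. simpl. split.
  - apply limR_spec. apply (geo_cv _ (B k) r); auto.
  - intros c Hc. apply limR_spec.
    set (Kd := INR (S d) * INR (S (S d)) / vol d (elt M k)).
    assert (HKd : 0 <= Kd) by (unfold Kd; apply Rmult_le_pos; [apply Rmult_le_pos; apply pos_INR|left; apply Rinv_0_lt_compat; auto]).
    apply (geo_cv _ (2 * (Kd * A + (elt M k O c)^2 * B k)) r); auto.
    + apply Rmult_le_pos; [lra|]. apply Rplus_le_le_0_compat; apply Rmult_le_pos; auto; apply pow2_ge_0.
    + intros m. pose proof (rta_bound d M (rt_sub (v (S (S m))) (v (S m))) k c Hk Hc (Hvol k Hk)) as R. cbn [rt_sub rta rtb] in R. fold Kd in R.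
      eapply Rle_trans; [exact R|].
      specialize (HV m). specialize (Hb m k Hk).
      assert (Kd * ipV d M (rt_sub (v (S (S m))) (v (S m))) (rt_sub (v (S (S m))) (v (S m))) <= Kd * (A * r^m)) by (apply Rmult_le_compat_l; auto).
      assert ((elt M k O c)^2 * (rtb (v (S (S m))) k - rtb (v (S m)) k)^2 <= (elt M k O c)^2 * (B k * r^m)) by (apply Rmult_le_compat_l; auto; apply pow2_ge_0).
      replace (2 * (Kd * A + elt M k O c ^ 2 * B k) * r ^ m) with (2 * (Kd * (A * r^m) + (elt M k O c)^2 * (B k * r^m))) by ring. lra.
Qed.

Lemma cv_sub0 x l : Un_cv x l -> Un_cv (fun i => x i - l) 0.
Proof. intros H. replace 0 with (l - l) by ring. apply CV_minus; auto. apply cv_const. Qed.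

Lemma RTcv_shift d M v vs : RTcv d M v vs -> RTcv d M (fun i => v (S i)) vs.
Proof. intros H k Hk. destruct (H k Hk) as [H1 H2]. split. apply (cv_shift (fun i => rtb (v i) k)); auto. intros c Hc. apply (cv_shift (fun i => rta (v i) k c)); auto. Qed.

Lemma RTcv_sub0 d M v vs : RTcv d M v vs -> RTcv d M (fun i => rt_sub (v i) vs) rt0.
Proof. intros H k Hk. destruct (H k Hk) as [H1 H2]. simpl. split. apply cv_sub0; auto. intros c Hc. apply cv_sub0; auto. Qed.

Lemma coordW d M w k : (k < nel M)%nat -> 0 < vol d (elt M k) -> (w k)^2 <= ipW d M w w / vol d (elt M k).
Proof. intros Hk HV. pose proof (ipW_coord d M w k Hk). apply Rmult_le_reg_l with (vol d (elt M k)); auto.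
  replace (vol d (elt M k) * (ipW d M w w / vol d (elt M k))) with (ipW d M w w) by (field; lra). auto. Qed.


Lemma Rdiv_le_0_compat x y : 0 <= x -> 0 < y -> 0 <= x / y.
Proof. intros. apply Rmult_le_pos; auto. left; apply Rinv_0_lt_compat; auto. Qed.

Lemma LS_parts d M s a fw f2 f1 f3 L tau Th0 Thp Th q p u :
  Lscheme_step d M s a fw f2 f1 f3 L tau Th0 Thp Th q p u ->
  in_Vh d M q /\ in_Vh d M u /\
  (forall w, ipW d M (fun k => L * (Th k - Thp k) + s (Thp k)) w + tau * ipWdiv d M w q = ipW d M (fun k => s (Th0 k)) w) /\
  (forall v, in_Vh d M v -> ipV d M q v - ipWdiv d M Th v - ipVw d M (fun k => fw (s (Thp k))) u v = ipFV d M (fun k => f1 (s (Thp k))) v) /\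
  (forall w, ipWdiv d M w u = ipW d M (fun k => f2 (s (Thp k))) w) /\
  (forall v, in_Vh d M v -> ipVw d M (fun k => a (s (Thp k))) u v - ipWdiv d M p v + ipFV d M (fun k => f3 (s (Thp k))) v = 0).
Proof. intros H. exact H. Qed.

Theorem theorem4p1
  (d : nat) (L a_lo a_hi Mu Fw La Lfw Lf1 Lf2 Lf3 C : R) :
  (1 <= d)%nat -> 0 < L -> 0 < a_lo -> a_lo <= a_hi -> 0 < C ->
  exists K : R, 0 < K /\
  forall (s a fw f2 : R -> R) (f1 f3 : R -> pt) (Ls : R),
    (* (A1) *)
    (forall x, 0 <= s x <= 1) -> (forall x y, x <= y -> s x <= s y) ->
    0 <= Ls -> Lip s Ls -> Ls <= L ->
    (* (A2) *)
    Lip a La -> (forall x, a_lo <= a x <= a_hi) ->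
    (* (A3) *)
    LipV d f1 Lf1 -> Lip f2 Lf2 -> LipV d f3 Lf3 -> Lip fw Lfw ->
    (forall x, Rabs (fw x) <= Fw) ->
  forall M : mesh, conforming d M -> div_stable d M C ->
  forall tau : R, 0 < tau -> tau <= 1 / K ->
  forall (Th : nat -> W) (q : nat -> rt) (p : nat -> W) (u : nat -> rt),
    (* Th 0 = Theta_h^{n-1}; iterates of P_h^{n,i} for i >= 1 *)
    (forall i, (1 <= i)%nat ->
       Lscheme_step d M s a fw f2 f1 f3 L tau (Th O) (Th (i - 1)%nat) (Th i) (q i) (p i) (u i)) ->
    (* (A4) *)
    (forall i, (1 <= i)%nat -> Linf_le d M (u i) Mu) ->
    (forall i, (2 <= i)%nat ->
       Rsqr (normW d M (Wsub (Th i) (Th (i - 1)%nat)))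
       <= 3 * C ^ 2 * L / (3 * C ^ 2 * L + tau)
          * Rsqr (normW d M (Wsub (Th (i - 1)%nat) (Th (i - 2)%nat)))) /\
    exists (Ths : W) (qs : rt) (ps : W) (us : rt),
      Un_cv (fun i => normW d M (Wsub (Th i) Ths)) 0 /\
      Un_cv (fun i => normV d M (rt_sub (q i) qs)) 0 /\
      Un_cv (fun i => normW d M (Wsub (p i) ps)) 0 /\
      Un_cv (fun i => normV d M (rt_sub (u i) us)) 0 /\
      Ph_n d M s a fw f2 f1 f3 tau (Th O) Ths qs ps us.
Proof.
  intros Hd HL Hlo Hlh HC.
  set (rho := rho_c a_lo a_hi C Mu Fw La Lfw Lf1 Lf2 Lf3).
  exists (3 * L * rho^2 + 1). split.
  { assert (0 <= 3 * L * rho^2) by (apply Rmult_le_pos; [lra|apply pow2_ge_0]). lra. }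
  intros s a fw f2 f1 f3 Ls Hs01 Hmono HLs0 HLs HLsL HLa Ha HLf1 HLf2 HLf3 HLfw HFw M Hconf Hdiv tau Htau HtauK Th q p u Hstep Hinf.
  assert (Hvol : forall k, (k < nel M)%nat -> 0 < vol d (elt M k)) by apply Hconf.
  assert (Hsmall : 3 * L * rho^2 * tau <= 1).
  { assert (0 <= 3 * L * rho^2) by (apply Rmult_le_pos; [lra|apply pow2_ge_0]).
    assert (tau * (3 * L * rho^2 + 1) <= 1).
    { apply Rmult_le_reg_r with (/ (3 * L * rho^2 + 1)). apply Rinv_0_lt_compat; lra.
      rewrite Rmult_assoc, Rinv_r, Rmult_1_r, Rmult_1_l by lra. unfold Rdiv in HtauK. lra. }
    nra. }
  set (r := 3 * C ^ 2 * L / (3 * C ^ 2 * L + tau)).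
  assert (Hr : 0 <= r < 1).
  { unfold r. assert (0 < C^2) by nra. split. apply Rmult_le_pos; [nra|left; apply Rinv_0_lt_compat; nra].
    apply Rmult_lt_reg_r with (3 * C ^ 2 * L + tau). nra. unfold Rdiv. rewrite Rmult_assoc, Rinv_l by nra. nra. }
  assert (HstepS : forall i, Lscheme_step d M s a fw f2 f1 f3 L tau (Th O) (Th i) (Th (S i)) (q (S i)) (p (S i)) (u (S i))).
  { intros i. pose proof (Hstep (S i) ltac:(lia)) as H. replace (S i - 1)%nat with i in H by lia. exact H. }
  pose proof (fun m => (step d M s a fw f2 f1 f3 L Ls tau C a_lo a_hi Mu Fw La Lfw Lf1 Lf2 Lf3
     (Th O) (Th (S (S m))) (Th (S m)) (Th m) (p (S (S m))) (p (S m)) (q (S (S m))) (q (S m)) (u (S (S m))) (u (S m))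
     HL Htau HC Hlo Hlh Hmono HLs0 HLs HLsL HLa Ha HLf1 HLf2 HLf3 HLfw HFw Hvol Hdiv
     (HstepS (S m)) (HstepS m) (Hinf (S m) ltac:(lia)) Hsmall)) as STEP.
  fold rho r in STEP.
  split.
  { intros i Hi. destruct i as [|[|m]]; try lia.
    replace (S (S m) - 1)%nat with (S m) by lia. replace (S (S m) - 2)%nat with m by lia.
    unfold normW, Wsub. rewrite !Rsqr_sqrt by apply ipW_nonneg. apply (STEP m). }
  set (En := fun j => ipW d M (fun k => Th (S j) k - Th j k) (fun k => Th (S j) k - Th j k)).
  assert (HEn0 : forall j, 0 <= En j) by (intros; apply ipW_nonneg).
  assert (Hgeo : forall m, En m <= r^m * En O).
  { induction m. simpl. lra. destruct (STEP m) as [H1 _].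
    change (ipW d M (fun k => Th (S (S m)) k - Th (S m) k) (fun k => Th (S (S m)) k - Th (S m) k)) with (En (S m)) in H1.
    change (ipW d M (fun k => Th (S m) k - Th m k) (fun k => Th (S m) k - Th m k)) with (En m) in H1.
    simpl. apply Rle_trans with (r * En m); auto. rewrite Rmult_assoc. apply Rmult_le_compat_l; lra. }
  assert (Hgeo' : forall m, En (S m) <= r^m * En O).
  { intros m. eapply Rle_trans. apply Hgeo. apply Rmult_le_compat_r; auto. simpl.
    assert (0 <= r^m) by (apply pow_le; lra). assert (r^m <= 1) by (apply pow_le1; lra). nra. }
  set (E0 := En O).
  assert (HE0 : 0 <= E0) by apply HEn0.
  assert (HThc : forall j k, (k < nel M)%nat -> (Th (S j) k - Th j k)^2 <= (E0 / vol d (elt M k)) * r^j).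
  { intros j k Hk. pose proof (coordW d M (fun k => Th (S j) k - Th j k) k Hk (Hvol k Hk)) as H. cbv beta in H.
    fold (En j) in H. eapply Rle_trans; [exact H|]. unfold Rdiv.
    replace (E0 * / vol d (elt M k) * r ^ j) with ((r^j * E0) * / vol d (elt M k)) by ring.
    apply Rmult_le_compat_r. left; apply Rinv_0_lt_compat; auto. apply Hgeo. }
  assert (HINR : 1 <= INR d) by (apply (le_INR 1); auto).
  destruct (W_geo d M Th E0 r HE0 Hr Hvol) as [Ths HThs].
  { intros m. fold (En (S m)). rewrite Rmult_comm. apply Hgeo'. }
  set (cp := cp_c a_lo a_hi C Mu La Lf2 Lf3) in *.
  set (cu := cu_c a_lo a_hi C Mu La Lf2 Lf3) in *.
  destruct (W_geo d M p ((cp * L)^2 * E0) r) as [ps Hps]; auto.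
  { apply Rmult_le_pos; auto; apply pow2_ge_0. }
  { intros m. destruct (STEP m) as (_ & _ & _ & HP & _). eapply Rle_trans; [exact HP|]. fold (En m).
    rewrite Rmult_assoc. apply Rmult_le_compat_l. apply pow2_ge_0. rewrite Rmult_comm. apply Hgeo. }
  destruct (RT_geo d M q ((L / tau + rho^2 * L^2) * E0) (fun k => 9 * L^2 * (E0 / vol d (elt M k)) / tau^2) r) as [qs Hqs]; auto.
  { apply Rmult_le_pos; auto. assert (0 <= L/tau) by (apply Rdiv_le_0_compat; lra). assert (0 <= rho^2 * L^2) by (apply Rmult_le_pos; apply pow2_ge_0). lra. }
  { intros k Hk. apply Rdiv_le_0_compat; [|nra]. apply Rmult_le_pos; [nra|]. apply Rdiv_le_0_compat; auto. }
  { intros m. destruct (STEP m) as (_ & HQ & _). eapply Rle_trans; [exact HQ|]. fold (En m).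
    rewrite Rmult_assoc. apply Rmult_le_compat_l. assert (0 <= L/tau) by (apply Rdiv_le_0_compat; lra). assert (0 <= rho^2 * L^2) by (apply Rmult_le_pos; apply pow2_ge_0). lra. rewrite Rmult_comm. apply Hgeo. }
  { intros m k Hk. destruct (STEP m) as (_ & _ & _ & _ & Pq & _). specialize (Pq k Hk). unfold divh in Pq.
    set (X := rtb (q (S (S m))) k - rtb (q (S m)) k).
    pose proof (HThc (S m) k Hk) as h1. pose proof (HThc m k Hk) as h2.
    pose proof (Lip_sq s Ls (Th (S m) k) (Th m k) HLs) as h3.
    assert (h4 : Ls^2 <= L^2) by nra.
    set (e1 := Th (S (S m)) k - Th (S m) k) in *. set (e2 := Th (S m) k - Th m k) in *.
    set (ds := s (Th (S m) k) - s (Th m k)) in *.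
    assert (hr : r^(S m) <= r^m) by (simpl; assert (0 <= r^m) by (apply pow_le; lra); nra).
    assert (G0 : 0 <= E0 / vol d (elt M k)) by (apply Rdiv_le_0_compat; auto).
    assert (h1' : e1^2 <= E0 / vol d (elt M k) * r^m) by (eapply Rle_trans; [exact h1|]; apply Rmult_le_compat_l; auto).
    assert (h3' : ds^2 <= L^2 * e2^2) by (eapply Rle_trans; [exact h3|]; apply Rmult_le_compat_r; [apply pow2_ge_0|auto]).
    assert (Hx : (tau * INR d * X)^2 <= 9 * L^2 * (E0 / vol d (elt M k) * r^m)).
    { replace (tau * INR d * X) with (tau * (INR d * rtb (q (S (S m))) k - INR d * rtb (q (S m)) k)) by (unfold X; ring).
      rewrite Pq.
      replace ((- (L * (e1 - e2) + ds))^2) with ((L * e1 - L * e2 + ds)^2) by ring.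
      apply Rle_trans with (3 * ((L*e1)^2 + (L*e2)^2 + ds^2)).
      { pose proof (pow2_ge_0 (L*e1 - (- L * e2))). pose proof (pow2_ge_0 (L*e1 - ds)). pose proof (pow2_ge_0 (- L*e2 - ds)). nra. }
      assert (L^2 * e1^2 <= L^2 * (E0 / vol d (elt M k) * r^m)) by (apply Rmult_le_compat_l; auto; apply pow2_ge_0).
      assert (L^2 * e2^2 <= L^2 * (E0 / vol d (elt M k) * r^m)) by (apply Rmult_le_compat_l; auto; apply pow2_ge_0).
      nra. }
    assert (X^2 <= (tau * INR d * X)^2 / tau^2).
    { replace ((tau * INR d * X)^2 / tau^2) with ((INR d)^2 * X^2) by (field; lra).
      rewrite <- (Rmult_1_l (X^2)) at 1. apply Rmult_le_compat_r; [apply pow2_ge_0|nra]. }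
    eapply Rle_trans; [exact H|]. unfold Rdiv. 
    replace (9 * L ^ 2 * (E0 * / vol d (elt M k)) * / tau ^ 2 * r ^ m) with ((9 * L ^ 2 * (E0 * / vol d (elt M k) * r^m)) * / tau^2) by ring.
    apply Rmult_le_compat_r; auto. left; apply Rinv_0_lt_compat; nra. }
  destruct (RT_geo d M u ((cu * L)^2 * E0) (fun k => Lf2^2 * L^2 * (E0 / vol d (elt M k))) r) as [us Hus]; auto.
  { apply Rmult_le_pos; auto; apply pow2_ge_0. }
  { intros k Hk. apply Rmult_le_pos; [apply Rmult_le_pos; apply pow2_ge_0|]. apply Rdiv_le_0_compat; auto. }
  { intros m. destruct (STEP m) as (_ & _ & HU & _). eapply Rle_trans; [exact HU|]. fold (En m).
    rewrite Rmult_assoc. apply Rmult_le_compat_l. apply pow2_ge_0. rewrite Rmult_comm. apply Hgeo. }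
  { intros m k Hk. destruct (STEP m) as (_ & _ & _ & _ & _ & Pu). specialize (Pu k Hk). unfold divh in Pu.
    set (X := rtb (u (S (S m))) k - rtb (u (S m)) k).
    pose proof (HThc m k Hk) as h2.
    pose proof (Lip_sq s Ls (Th (S m) k) (Th m k) HLs) as h3.
    pose proof (Lip_sq f2 Lf2 (s (Th (S m) k)) (s (Th m k)) HLf2) as h5.
    assert (h4 : Ls^2 <= L^2) by nra.
    assert (Hx : (INR d * X)^2 = (f2 (s (Th (S m) k)) - f2 (s (Th m k)))^2) by (rewrite <- Pu; unfold X; ring).
    assert (X^2 <= (INR d * X)^2).
    { rewrite Rpow_mult_distr. rewrite <- (Rmult_1_l (X^2)) at 1. apply Rmult_le_compat_r; [apply pow2_ge_0|nra]. }
    rewrite Hx in H. eapply Rle_trans; [exact H|]. eapply Rle_trans; [exact h5|].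
    replace (Lf2 ^ 2 * L ^ 2 * (E0 / vol d (elt M k)) * r ^ m) with (Lf2^2 * (L^2 * (E0 / vol d (elt M k) * r ^ m))) by ring.
    apply Rmult_le_compat_l. apply pow2_ge_0. eapply Rle_trans; [exact h3|].
    apply Rmult_le_compat; auto; apply pow2_ge_0. }
  exists Ths, qs, ps, us.
  assert (HsTh : forall k, (k < nel M)%nat -> Un_cv (fun i => s (Th i k)) (s (Ths k))).
  { intros k Hk. apply (cv_lip s Ls); auto. }
  assert (HThS : forall k, (k < nel M)%nat -> Un_cv (fun i => Th (S i) k) (Ths k)).
  { intros k Hk. apply (cv_shift (fun i => Th i k)); auto. }
  assert (HpS : forall k, (k < nel M)%nat -> Un_cv (fun i => p (S i) k) (ps k)).
  { intros k Hk. apply (cv_shift (fun i => p i k)); auto. }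
  pose proof (RTcv_shift d M q qs Hqs) as HqS. pose proof (RTcv_shift d M u us Hus) as HuS.
  split; [|split; [|split; [|split]]].
  - unfold normW, Wsub. apply cv_sqrt0. intros; apply ipW_nonneg.
    assert (Hz := ipW_cv d M (fun i k => Th i k - Ths k) (fun i k => Th i k - Ths k) (fun _ => 0) (fun _ => 0)
       ltac:(intros; apply cv_sub0; auto) ltac:(intros; apply cv_sub0; auto)).
    rewrite ipW_zero in Hz. exact Hz.
  - unfold normV. apply cv_sqrt0. intros; apply ipV_nonneg.
    assert (Hz := ipV_cv d M _ _ _ _ (RTcv_sub0 d M q qs Hqs) (RTcv_sub0 d M q qs Hqs)).
    rewrite ipV_rt0 in Hz. exact Hz.
  - unfold normW, Wsub. apply cv_sqrt0. intros; apply ipW_nonneg.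
    assert (Hz := ipW_cv d M (fun i k => p i k - ps k) (fun i k => p i k - ps k) (fun _ => 0) (fun _ => 0)
       ltac:(intros; apply cv_sub0; auto) ltac:(intros; apply cv_sub0; auto)).
    rewrite ipW_zero in Hz. exact Hz.
  - unfold normV. apply cv_sqrt0. intros; apply ipV_nonneg.
    assert (Hz := ipV_cv d M _ _ _ _ (RTcv_sub0 d M u us Hus) (RTcv_sub0 d M u us Hus)).
    rewrite ipV_rt0 in Hz. exact Hz.
  - unfold Ph_n. cbv zeta.
    assert (PARTS := fun i => LS_parts _ _ _ _ _ _ _ _ _ _ _ _ _ _ _ _ (HstepS i)).
    split; [|split; [|split; [|split; [|split]]]].
    + apply (in_Vh_lim d M (fun i => q (S i))); auto. intros i; apply (PARTS i).
    + apply (in_Vh_lim d M (fun i => u (S i))); auto. intros i; apply (PARTS i).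
    + intros w. cbv beta.
      assert (Hl := cv_eq
        (fun i => ipW d M (fun k => L * (Th (S i) k - Th i k) + s (Th i k)) w + tau * ipWdiv d M w (q (S i)))
        (fun i => ipW d M (fun k => s (Th O k)) w) _ _
        (fun i => proj1 (proj2 (proj2 (PARTS i))) w)
        (CV_plus _ _ _ _ (ipW_cv d M _ (fun _ => w) (fun k => L * (Ths k - Ths k) + s (Ths k)) w
             (fun k Hk => CV_plus _ _ _ _ (CV_mult _ _ _ _ (cv_const L) (CV_minus _ _ _ _ (HThS k Hk) (HThs k Hk))) (HsTh k Hk))
             (fun k Hk => cv_const (w k)))
           (CV_mult _ _ _ _ (cv_const tau) (ipWdiv_cv d M (fun _ => w) w _ _ (fun k Hk => cv_const (w k)) HqS)))
        (cv_const _)).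
      rewrite ipW_sub_l. rewrite <- Hl.
      assert (ipW d M (fun k => L * (Ths k - Ths k) + s (Ths k)) w = ipW d M (fun k => s (Ths k)) w).
      { unfold ipW. apply sumR_ext; intros; ring. }
      lra.
    + intros v Hv. cbv beta.
      apply (cv_eq
        (fun i => ipV d M (q (S i)) v - ipWdiv d M (Th (S i)) v - ipVw d M (fun k => fw (s (Th i k))) (u (S i)) v)
        (fun i => ipFV d M (fun k => f1 (s (Th i k))) v)).
      * intros i. apply (proj1 (proj2 (proj2 (proj2 (PARTS i))))); auto.
      * apply CV_minus. apply CV_minus. apply ipV_cv; auto; apply RTcv_const.
        apply ipWdiv_cv; auto; apply RTcv_const.
        apply (ipVw_cv d M (fun i k => fw (s (Th i k)))); auto; [|apply RTcv_const].
        intros k Hk. apply (cv_lip fw Lfw); auto.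
      * apply (ipFV_cv d M (fun i k => f1 (s (Th i k)))); [|apply RTcv_const].
        intros k c Hk Hc. apply (cv_lipV d f1 Lf1); auto.
    + intros w. cbv beta.
      apply (cv_eq (fun i => ipWdiv d M w (u (S i))) (fun i => ipW d M (fun k => f2 (s (Th i k))) w)).
      * intros i. apply (proj1 (proj2 (proj2 (proj2 (proj2 (PARTS i)))))).
      * apply (ipWdiv_cv d M (fun _ => w)); auto. intros; apply cv_const.
      * apply (ipW_cv d M (fun i k => f2 (s (Th i k))) (fun _ => w)). intros k Hk. apply (cv_lip f2 Lf2); auto. intros; apply cv_const.
    + intros v Hv. cbv beta.
      apply (cv_eq (fun i => ipVw d M (fun k => a (s (Th i k))) (u (S i)) v - ipWdiv d M (p (S i)) v + ipFV d M (fun k => f3 (s (Th i k))) v) (fun _ => 0)).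
      * intros i. apply (proj2 (proj2 (proj2 (proj2 (proj2 (PARTS i)))))); auto.
      * apply CV_plus. apply CV_minus.
        apply (ipVw_cv d M (fun i k => a (s (Th i k)))); auto; [|apply RTcv_const]. intros k Hk. apply (cv_lip a La); auto.
        apply ipWdiv_cv; auto; apply RTcv_const.
        apply (ipFV_cv d M (fun i k => f3 (s (Th i k)))); [|apply RTcv_const].
        intros k c Hk Hc. apply (cv_lipV d f3 Lf3); auto.
      * apply cv_const.
Qed.
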